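(* Let $0<\beta<2$ and let $\Lambda>0$, $\delta>0$ with $\beta+\delta>1$. For $\varepsilon$ with $0<\varepsilon<\beta/2$, and additionally $\varepsilon<\frac{\beta-1}{2}$ if $\beta>1$, let $u_\varepsilon\in C^1(\mathbb{R})$ be an even function of the form \[u_\varepsilon(x)=\begin{cases}|x|^{\beta-\varepsilon},&|x|\ge1,\\ \phi(x),&|x|<1,\end{cases}\] where $\phi$ (possibly depending on $\varepsilon$) satisfies $0\le\phi(x)\le\Lambda|x|^{\beta+\delta}$ and $|\phi'(x)|\le\Lambda|x|^{\beta+\delta-1}$ for $|x|\le1$. Then there exist $\varepsilon_0>0$ and constants $C_0,C_1>0$, independent of $\varepsilon$, such that for all admissible $0<\varepsilon<\varepsilon_0$ \[\mathcal{L}u_\varepsilon(0)\ge\frac{C_0}{\varepsilon},\qquad 0<\Gamma_2(u_\varepsilon)(0)\le\frac{C_1}{\varepsilon}.\] In particular, for every $\mu>0$ there exists such a $u$ with $0<\Gamma_2(u)(0)<\mu(\mathcal{L}u(0))^2<\infty$.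
   Context: Here $d=1$: $c_{\beta,1}=\frac{2^\beta\Gamma(\frac{1+\beta}{2})}{\pi^{1/2}|\Gamma(-\frac{\beta}{2})|}$, $\mathcal{L}u(x)=c_{\beta,1}\int_{\mathbb{R}}\frac{u(x+h)-2u(x)+u(x-h)}{|h|^{1+\beta}}dh$, $\Gamma_2(u)(x)=c_{\beta,1}^2\int_{\mathbb{R}}\int_{\mathbb{R}}\frac{[u(x+h+\sigma)-u(x+h)-u(x+\sigma)+u(x)]^2}{|h|^{1+\beta}|\sigma|^{1+\beta}}dh\,d\sigma$ (defined by these integrals also for unbounded functions when they converge). *)

(* Defs.v *)
From Stdlib Require Import Reals Lra ClassicalEpsilon.
Open Scope R_scope.

(* |x|^p, with the convention 0^p = 0 (used only for p > 0, or away from 0). *)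
Definition apow (x p : R) : R :=
  if Rlt_dec 0 (Rabs x) then Rpower (Rabs x) p else 0.

Definition ImpIntPos (f : R -> R) (l : R) : Prop :=
  forall e, 0 < e -> exists a0 b0, 0 < a0 /\
    forall a b, 0 < a < a0 -> b0 < b ->
      exists pr : Riemann_integrable f a b, Rabs (RiemannInt pr - l) < e.

Definition ImpIntR (f : R -> R) (l : R) : Prop :=
  exists l1 l2, ImpIntPos f l1 /\ ImpIntPos (fun x => f (- x)) l2 /\ l = l1 + l2.

(* Euler Gamma function: integral for s > 0, and Gamma(s) = Gamma(s+1)/s for
   s in (-1,0] (only used for s = -beta/2 with 0 < beta < 2). *)
Definition Gamma_pos (s : R) : R :=
  epsilon (inhabits 0)
    (fun g => ImpIntPos (fun t => Rpower t (s - 1) * exp (- t)) g).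

Definition Gamma (s : R) : R :=
  if Rlt_dec 0 s then Gamma_pos s else Gamma_pos (s + 1) / s.

Definition c_beta (beta : R) : R :=
  Rpower 2 beta * Gamma ((1 + beta) / 2) / (sqrt PI * Rabs (Gamma (- beta / 2))).

Definition frac_lap_at (beta : R) (u : R -> R) (x l : R) : Prop :=
  exists I, ImpIntR (fun h => (u (x + h) - 2 * u x + u (x - h)) / apow h (1 + beta)) I
            /\ l = c_beta beta * I.

(* "Gamma_2(u)(x) = g", as the iterated integral (inner in h, outer in sigma),
   both improper integrals converging. *)
Definition gamma2_at (beta : R) (u : R -> R) (x g : R) : Prop :=
  exists (F : R -> R) (I : R),
    (forall s, s <> 0 ->
       ImpIntR (fun h => (u (x + h + s) - u (x + h) - u (x + s) + u x) ^ 2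
                          / (apow h (1 + beta) * apow s (1 + beta))) (F s))
    /\ ImpIntR F I /\ g = c_beta beta ^ 2 * I.

Definition admissible (beta Lam delta eps : R) (u : R -> R) : Prop :=
  0 < eps /\ eps < beta / 2 /\ (1 < beta -> eps < (beta - 1) / 2) /\
  (exists u' : R -> R,
     (forall x, derivable_pt_lim u x (u' x)) /\ continuity u' /\
     (forall x, Rabs x < 1 -> Rabs (u' x) <= Lam * apow x (beta + delta - 1))) /\
  (forall x, u (- x) = u x) /\
  (forall x, 1 <= Rabs x -> u x = Rpower (Rabs x) (beta - eps)) /\
  (forall x, Rabs x < 1 -> 0 <= u x <= Lam * apow x (beta + delta)).

(* Main.v *)
Require Import Defs.
From Stdlib Require Import Reals Lra ClassicalEpsilon.
From Coquelicot Require Import Coquelicot.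
Open Scope R_scope.

Lemma exp_le' x y : x <= y -> exp x <= exp y.
Proof. intros [H|H]; [left; apply exp_increasing; auto| subst; lra]. Qed.

Lemma ln_le' x y : 0 < x -> x <= y -> ln x <= ln y.
Proof. intros Hx [H|H]; [left; apply ln_increasing; auto| subst; lra]. Qed.

Lemma ln_neg' x : 0 < x -> x < 1 -> ln x < 0.
Proof. intros; rewrite <- ln_1; apply ln_increasing; lra. Qed.

Lemma ln_pos' x : 1 < x -> 0 < ln x.
Proof. intros; rewrite <- ln_1; apply ln_increasing; lra. Qed.

Lemma rp_pos x e : 0 < Rpower x e.
Proof. unfold Rpower; apply exp_pos. Qed.

Lemma rp_plus x e f : Rpower x (e + f) = Rpower x e * Rpower x f.
Proof. apply Rpower_plus. Qed.

Lemma rp_mono_base x y e : 0 < x -> x <= y -> 0 <= e -> Rpower x e <= Rpower y e.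
Proof. intros; unfold Rpower; apply exp_le'; apply Rmult_le_compat_l; auto; apply ln_le'; auto. Qed.

Lemma rp_anti_base x y e : 0 < x -> x <= y -> e <= 0 -> Rpower y e <= Rpower x e.
Proof.
  intros; unfold Rpower; apply exp_le'.
  assert (ln x <= ln y) by (apply ln_le'; auto). nra.
Qed.

Lemma rp_mono_exp x e f : 1 <= x -> e <= f -> Rpower x e <= Rpower x f.
Proof.
  intros; unfold Rpower; apply exp_le'.
  assert (0 <= ln x) by (rewrite <- ln_1; apply ln_le'; lra). nra.
Qed.

Lemma rp_anti_exp x e f : 0 < x -> x <= 1 -> e <= f -> Rpower x f <= Rpower x e.
Proof.
  intros; unfold Rpower; apply exp_le'.
  assert (ln x <= 0) by (rewrite <- ln_1; apply ln_le'; lra). nra.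
Qed.

Lemma rp_one e : Rpower 1 e = 1.
Proof. unfold Rpower; rewrite ln_1, Rmult_0_r, exp_0; auto. Qed.

Lemma rp_0 x : 0 < x -> Rpower x 0 = 1.
Proof. apply Rpower_O. Qed.

Lemma rp_1 x : 0 < x -> Rpower x 1 = x.
Proof. apply Rpower_1. Qed.

Lemma rp_mult_base x y e : 0 < x -> 0 < y -> Rpower (x * y) e = Rpower x e * Rpower y e.
Proof. intros; rewrite Rpower_mult_distr; auto. Qed.

Lemma rp_sq x e : Rpower x e ^ 2 = Rpower x (2 * e).
Proof. simpl; rewrite Rmult_1_r, <- rp_plus; f_equal; ring. Qed.

Lemma rp_inv x e : / Rpower x e = Rpower x (- e).
Proof. rewrite Rpower_Ropp; auto. Qed.

Lemma rp_div x e f : Rpower x e / Rpower x f = Rpower x (e - f).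
Proof. unfold Rdiv; rewrite rp_inv, <- rp_plus; f_equal. Qed.

Lemma rp_lt1 x e : 0 < x -> x < 1 -> 0 < e -> Rpower x e < 1.
Proof.
  intros; unfold Rpower; rewrite <- exp_0; apply exp_increasing.
  assert (ln x < 0) by (apply ln_neg'; auto). nra.
Qed.

Lemma rp_gt1 x e : 1 < x -> 0 < e -> 1 < Rpower x e.
Proof.
  intros; unfold Rpower; rewrite <- exp_0; apply exp_increasing.
  assert (0 < ln x) by (apply ln_pos'; auto). nra.
Qed.

Lemma rp_strict_exp_lt1 x e f : 0 < x -> x < 1 -> e < f -> Rpower x f < Rpower x e.
Proof.
  intros; unfold Rpower; apply exp_increasing.
  assert (ln x < 0) by (apply ln_neg'; auto). nra.
Qed.

Lemma rp_pow_rp x e f : 0 < x -> Rpower (Rpower x e) f = Rpower x (e * f).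
Proof. intros; apply Rpower_mult. Qed.

Lemma rp_cont x e : 0 < x -> continuous (fun y => Rpower y e) x.
Proof.
  intros Hx. apply continuity_pt_filterlim.
  apply derivable_continuous_pt. exists (e * Rpower x (e - 1)).
  apply derivable_pt_lim_power; auto.
Qed.

Lemma rp_derive x e : 0 < x -> is_derive (fun y => Rpower y e) x (e * Rpower x (e - 1)).
Proof.
  intros Hx. apply is_derive_Reals. apply derivable_pt_lim_power; auto.
Qed.

Lemma RInt_scal' f a b c : ex_RInt f a b -> RInt (fun x => c * f x) a b = c * RInt f a b.
Proof. intros H; exact (RInt_scal f a b c H). Qed.

Lemma RInt_plus' f g a b : ex_RInt f a b -> ex_RInt g a b ->
  RInt (fun x => f x + g x) a b = RInt f a b + RInt g a b.
Proof. intros H1 H2; exact (RInt_plus f g a b H1 H2). Qed.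

Lemma ex_RInt_plus' f g a b : ex_RInt f a b -> ex_RInt g a b -> ex_RInt (fun x => f x + g x) a b.
Proof. intros H1 H2; exact (ex_RInt_plus f g a b H1 H2). Qed.

Lemma ex_RInt_scal' f a b c : ex_RInt f a b -> ex_RInt (fun x => c * f x) a b.
Proof. intros H; exact (ex_RInt_scal f a b c H). Qed.

Lemma RInt_point' f a : RInt f a a = 0.
Proof. exact (RInt_point a f). Qed.

Lemma RInt_Chasles' f a b c : ex_RInt f a b -> ex_RInt f b c -> RInt f a b + RInt f b c = RInt f a c.
Proof. intros H1 H2; exact (RInt_Chasles f a b c H1 H2). Qed.

Definition pcont (f : R -> R) := forall x, 0 < x -> continuous f x.
Definition pnn (f : R -> R) := forall x, 0 < x -> 0 <= f x.

Lemma exR f a b : pcont f -> 0 < a -> a <= b -> ex_RInt f a b.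
Proof.
  intros Hc Ha Hab. apply (ex_RInt_continuous (V:=R_CompleteNormedModule)). intros z Hz.
  rewrite Rmin_left in Hz by lra. apply Hc; lra.
Qed.

Lemma RInt_nn f a b : pcont f -> pnn f -> 0 < a -> a <= b -> 0 <= RInt f a b.
Proof.
  intros Hc Hn Ha Hab. apply RInt_ge_0; [lra| apply exR; auto|].
  intros; apply Hn; lra.
Qed.

Lemma RInt_mono_int f a b a' b' : pcont f -> pnn f -> 0 < a' -> a' <= a -> a <= b -> b <= b' ->
  RInt f a b <= RInt f a' b'.
Proof.
  intros Hc Hn H1 H2 H3 H4.
  rewrite <- (RInt_Chasles' f a' a b') by (apply exR; auto; lra).
  rewrite <- (RInt_Chasles' f a b b') by (apply exR; auto; lra).
  assert (0 <= RInt f a' a) by (apply RInt_nn; auto; lra).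
  assert (0 <= RInt f b b') by (apply RInt_nn; auto; lra). lra.
Qed.

Lemma RInt_le' f g a b : pcont f -> pcont g -> 0 < a -> a <= b ->
  (forall x, a < x < b -> f x <= g x) -> RInt f a b <= RInt g a b.
Proof. intros; apply RInt_le; auto; apply exR; auto. Qed.

Lemma RInt_rp a b e : 0 < a -> a <= b -> e + 1 <> 0 ->
  RInt (fun x => Rpower x e) a b = (Rpower b (e + 1) - Rpower a (e + 1)) / (e + 1).
Proof.
  intros Ha Hab He.
  apply is_RInt_unique.
  assert (H := is_RInt_derive (fun x => Rpower x (e + 1) / (e + 1)) (fun x => Rpower x e) a b).
  replace ((Rpower b (e + 1) - Rpower a (e + 1)) / (e + 1)) with
    (minus (Rpower b (e + 1) / (e + 1)) (Rpower a (e + 1) / (e + 1))).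
  2:{ unfold minus, plus, opp; simpl; field; auto. }
  apply H.
  - intros x Hx. rewrite Rmin_left, Rmax_right in Hx by lra.
    replace (Rpower x e) with (/ (e + 1) * ((e + 1) * Rpower x (e + 1 - 1))).
    2:{ replace (e + 1 - 1) with e by ring; field; auto. }
    apply (is_derive_ext (fun y => / (e + 1) * Rpower y (e + 1)) (fun y => Rpower y (e + 1) / (e + 1))).
    + intros t; unfold Rdiv; apply Rmult_comm.
    + apply is_derive_scal, rp_derive; lra.
  - intros x Hx. rewrite Rmin_left, Rmax_right in Hx by lra. apply rp_cont; lra.
Qed.

Lemma pcont_rp e : pcont (fun x => Rpower x e).
Proof. intros x Hx; apply rp_cont; auto. Qed.

Lemma pcont_scal c f : pcont f -> pcont (fun x => c * f x).
Proof. intros H x Hx. apply (continuous_mult (fun _ => c) f); [apply continuous_const| apply H; auto]. Qed.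

Lemma pcont_plus f g : pcont f -> pcont g -> pcont (fun x => f x + g x).
Proof. intros H1 H2 x Hx. apply (continuous_plus f g); auto. Qed.

Definition IB f x y M := forall a b, 0 < a -> x <= a -> a <= b -> b <= y -> RInt f a b <= M.
Definition IBi f x M := forall a b, 0 < a -> x <= a -> a <= b -> RInt f a b <= M.

Section IBs.
Variable f : R -> R.
Hypothesis Hc : pcont f.
Hypothesis Hn : pnn f.

Lemma IB_split x y z M1 M2 : 0 < y -> x <= y -> y <= z -> IB f x y M1 -> IB f y z M2 -> IB f x z (M1 + M2).
Proof.
  intros Hy Hxy Hyz H1 H2 a b Ha Hxa Hab Hbz.
  assert (0 <= M1) by (apply Rle_trans with (RInt f y y); [rewrite RInt_point'; lra| apply H1; lra]).
  assert (0 <= M2) by (apply Rle_trans with (RInt f y y); [rewrite RInt_point'; lra| apply H2; lra]).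
  destruct (Rle_dec b y).
  - assert (RInt f a b <= M1) by (apply H1; lra). lra.
  - destruct (Rle_dec y a).
    + assert (RInt f a b <= M2) by (apply H2; lra). lra.
    + rewrite <- (RInt_Chasles' f a y b) by (apply exR; auto; lra).
      assert (RInt f a y <= M1) by (apply H1; lra).
      assert (RInt f y b <= M2) by (apply H2; lra). lra.
Qed.

Lemma IBi_split x y M1 M2 : 0 < y -> x <= y -> IB f x y M1 -> IBi f y M2 -> IBi f x (M1 + M2).
Proof.
  intros Hy Hxy H1 H2 a b Ha Hxa Hab.
  assert (0 <= M1) by (apply Rle_trans with (RInt f y y); [rewrite RInt_point'; lra| apply H1; lra]).
  assert (0 <= M2) by (apply Rle_trans with (RInt f y y); [rewrite RInt_point'; lra| apply H2; lra]).
  destruct (Rle_dec b y).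
  - assert (RInt f a b <= M1) by (apply H1; lra). lra.
  - destruct (Rle_dec y a).
    + assert (RInt f a b <= M2) by (apply H2; lra). lra.
    + rewrite <- (RInt_Chasles' f a y b) by (apply exR; auto; lra).
      assert (RInt f a y <= M1) by (apply H1; lra).
      assert (RInt f y b <= M2) by (apply H2; lra). lra.
Qed.
End IBs.

Lemma IB_le f g x y M : pcont f -> pcont g -> (forall h, 0 < h -> x < h < y -> f h <= g h) -> IB g x y M -> IB f x y M.
Proof.
  intros Hf Hg Hle H a b Ha Hxa Hab Hby.
  apply Rle_trans with (RInt g a b); [| apply H; auto].
  apply RInt_le'; auto. intros; apply Hle; lra.
Qed.

Lemma IBi_le f g x M : pcont f -> pcont g -> (forall h, 0 < h -> x < h -> f h <= g h) -> IBi g x M -> IBi f x M.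
Proof.
  intros Hf Hg Hle H a b Ha Hxa Hab.
  apply Rle_trans with (RInt g a b); [| apply H; auto].
  apply RInt_le'; auto. intros; apply Hle; lra.
Qed.

Lemma IB_plus f g x y M1 M2 : pcont f -> pcont g -> IB f x y M1 -> IB g x y M2 -> IB (fun h => f h + g h) x y (M1 + M2).
Proof.
  intros Hf Hg H1 H2 a b Ha Hxa Hab Hby.
  rewrite RInt_plus' by (apply exR; auto).
  assert (RInt f a b <= M1) by (apply H1; auto).
  assert (RInt g a b <= M2) by (apply H2; auto). lra.
Qed.

Lemma IBi_plus f g x M1 M2 : pcont f -> pcont g -> IBi f x M1 -> IBi g x M2 -> IBi (fun h => f h + g h) x (M1 + M2).
Proof.
  intros Hf Hg H1 H2 a b Ha Hxa Hab.
  rewrite RInt_plus' by (apply exR; auto).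
  assert (RInt f a b <= M1) by (apply H1; auto).
  assert (RInt g a b <= M2) by (apply H2; auto). lra.
Qed.

Lemma IB_of_IBi f x y M : IBi f x M -> IB f x y M.
Proof. intros H a b Ha Hxa Hab Hby; apply H; auto. Qed.

Lemma IB_M f x y M M' : M <= M' -> IB f x y M -> IB f x y M'.
Proof. intros HM H a b Ha Hxa Hab Hby; apply Rle_trans with M; auto. Qed.

Lemma IBi_M f x M M' : M <= M' -> IBi f x M -> IBi f x M'.
Proof. intros HM H a b Ha Hxa Hab; apply Rle_trans with M; auto. Qed.

Lemma IB_pow0 c e x y : 0 <= c -> -1 < e -> 0 < y ->
  IB (fun h => c * Rpower h e) x y (c * Rpower y (e + 1) / (e + 1)).
Proof.
  intros Hc He Hy a b Ha Hxa Hab Hby.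
  rewrite RInt_scal' by (apply exR; auto; apply pcont_rp).
  rewrite RInt_rp by (auto; lra).
  unfold Rdiv. rewrite Rmult_assoc. apply Rmult_le_compat_l; auto.
  apply Rmult_le_compat_r. { left; apply Rinv_0_lt_compat; lra. }
  assert (Rpower b (e + 1) <= Rpower y (e + 1)) by (apply rp_mono_base; lra).
  assert (0 < Rpower a (e + 1)) by apply rp_pos. lra.
Qed.

Lemma IBi_pow c e x : 0 <= c -> e < -1 -> 0 < x ->
  IBi (fun h => c * Rpower h e) x (c * Rpower x (e + 1) / (- (e + 1))).
Proof.
  intros Hc He Hx a b Ha Hxa Hab.
  rewrite RInt_scal' by (apply exR; auto; apply pcont_rp).
  rewrite RInt_rp by (auto; lra).
  replace ((Rpower b (e + 1) - Rpower a (e + 1)) / (e + 1)) with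
    ((Rpower a (e + 1) - Rpower b (e + 1)) / (- (e + 1))) by (field; lra).
  unfold Rdiv. rewrite Rmult_assoc. apply Rmult_le_compat_l; auto.
  apply Rmult_le_compat_r. { left; apply Rinv_0_lt_compat; lra. }
  assert (Rpower a (e + 1) <= Rpower x (e + 1)) by (apply rp_anti_base; lra).
  assert (0 < Rpower b (e + 1)) by apply rp_pos. lra.
Qed.

Lemma ImpIntPos_unique f l1 l2 : ImpIntPos f l1 -> ImpIntPos f l2 -> l1 = l2.
Proof.
  intros H1 H2. destruct (Req_dec l1 l2) as [|Hne]; auto. exfalso.
  set (e := Rabs (l1 - l2) / 2).
  assert (He : 0 < e) by (unfold e; assert (0 < Rabs (l1 - l2)) by (apply Rabs_pos_lt; lra); lra).
  destruct (H1 e He) as (a1 & b1 & Ha1 & K1).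
  destruct (H2 e He) as (a2 & b2 & Ha2 & K2).
  set (a := Rmin a1 a2 / 2). set (b := Rmax b1 b2 + 1).
  assert (0 < a < a1) by (unfold a; assert (Rmin a1 a2 <= a1) by apply Rmin_l;
     assert (0 < Rmin a1 a2) by (apply Rmin_glb_lt; auto); lra).
  assert (0 < a < a2) by (unfold a; assert (Rmin a1 a2 <= a2) by apply Rmin_r;
     assert (0 < Rmin a1 a2) by (apply Rmin_glb_lt; auto); lra).
  assert (b1 < b) by (unfold b; assert (b1 <= Rmax b1 b2) by apply Rmax_l; lra).
  assert (b2 < b) by (unfold b; assert (b2 <= Rmax b1 b2) by apply Rmax_r; lra).
  destruct (K1 a b) as [pr1 E1]; auto.
  destruct (K2 a b) as [pr2 E2]; auto.
  rewrite (RiemannInt_P5 pr1 pr2) in E1.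
  assert (Rabs (l1 - l2) <= Rabs (RiemannInt pr2 - l2) + Rabs (RiemannInt pr2 - l1)).
  { replace (l1 - l2) with ((RiemannInt pr2 - l2) - (RiemannInt pr2 - l1)) by ring.
    apply Rle_trans with (Rabs (RiemannInt pr2 - l2) + Rabs (- (RiemannInt pr2 - l1))).
    apply Rabs_triang. rewrite Rabs_Ropp; lra. }
  unfold e in *. lra.
Qed.

Lemma ImpIntPos_of_IBi f M : pcont f -> pnn f -> IBi f 0 M ->
  exists l, ImpIntPos f l /\ l <= M /\ (forall a b, 0 < a -> a <= b -> RInt f a b <= l).
Proof.
  intros Hc Hn HB.
  set (E := fun y => exists a b, 0 < a /\ a <= b /\ y = RInt f a b).
  assert (Hb : bound E).
  { exists M. intros y (a & b & Ha & Hab & ->). apply HB; lra. }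
  assert (Hne : exists y, E y) by (exists (RInt f 1 1); exists 1, 1; repeat split; lra).
  destruct (completeness E Hb Hne) as [l [Hub Hlub]].
  exists l. split; [| split].
  - intros e He.
    assert (~ (forall y, E y -> y <= l - e)).
    { intros Hc'. assert (l <= l - e) by (apply Hlub; intros y Hy; apply Hc'; auto). lra. }
    apply Classical_Pred_Type.not_all_ex_not in H. destruct H as [y Hy].
    apply Classical_Prop.imply_to_and in Hy. destruct Hy as [(a1 & b1 & Ha1 & Hab1 & ->) Hy].
    exists a1, b1. split; auto. intros a b Ha Hb'.
    assert (Hex : ex_RInt f a b) by (apply exR; auto; lra).
    exists (ex_RInt_Reals_0 _ _ _ Hex). rewrite <- RInt_Reals.
    assert (RInt f a1 b1 <= RInt f a b) by (apply RInt_mono_int; auto; lra).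
    assert (RInt f a b <= l) by (apply Hub; exists a, b; repeat split; lra).
    apply Rabs_def1; lra.
  - apply Hlub. intros y (a & b & Ha & Hab & ->). apply HB; lra.
  - intros a b Ha Hab. apply Hub. exists a, b; auto.
Qed.

Definition ipos (f : R -> R) : R := epsilon (inhabits 0) (fun l => ImpIntPos f l).

Lemma ipos_eq f l : ImpIntPos f l -> ipos f = l.
Proof.
  intros H. apply (ImpIntPos_unique f); auto.
  unfold ipos. apply (epsilon_spec (inhabits 0) (fun l => ImpIntPos f l)). exists l; auto.
Qed.

Lemma ipos_spec f M : pcont f -> pnn f -> IBi f 0 M ->
  ImpIntPos f (ipos f) /\ ipos f <= M /\ (forall a b, 0 < a -> a <= b -> RInt f a b <= ipos f).
Proof.
  intros Hc Hn HB. destruct (ImpIntPos_of_IBi f M Hc Hn HB) as (l & H1 & H2 & H3).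
  rewrite (ipos_eq f l H1). auto.
Qed.

Lemma cont_of_der f x l : derivable_pt_lim f x l -> continuous f x.
Proof. intros H. apply continuity_pt_filterlim, derivable_continuous_pt. exists l; auto. Qed.

Lemma exp_cube t : 0 <= t -> t ^ 3 <= 27 * exp t.
Proof.
  intros Ht.
  assert (E : exp t = exp (t / 3) ^ 3).
  { simpl. rewrite Rmult_1_r, <- !exp_plus. f_equal. field. }
  destruct (Req_dec t 0) as [->|Hn].
  - rewrite exp_0; lra.
  - assert (1 + t / 3 < exp (t / 3)) by (apply exp_ineq1; lra).
    rewrite E. assert (t / 3 <= exp (t / 3)) by lra.
    assert (0 <= t / 3) by lra.
    assert ((t/3) ^ 3 <= exp (t/3) ^ 3) by (apply pow_incr; lra).
    replace (t ^ 3) with (27 * (t / 3) ^ 3) by (simpl; field). lra.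
Qed.

Section GammaSec.
Variable s : R.
Hypothesis Hs : 0 < s < 2.
Let f := fun t => Rpower t (s - 1) * exp (- t).

Lemma gf_pcont : pcont f.
Proof.
  intros x Hx. unfold f. apply (continuous_mult (fun t => Rpower t (s - 1)) (fun t => exp (- t))).
  - apply rp_cont; auto.
  - apply (cont_of_der _ _ (- exp (- x))). apply is_derive_Reals. auto_derive; auto; ring.
Qed.

Lemma gf_pos x : 0 < x -> 0 < f x.
Proof. intros; unfold f; apply Rmult_lt_0_compat; [apply rp_pos| apply exp_pos]. Qed.

Lemma gf_IBi : IBi f 0 (1 * Rpower 1 (s - 1 + 1) / (s - 1 + 1) + 27 * Rpower 1 (s - 4 + 1) / (- (s - 4 + 1))).
Proof.
  apply IBi_split with 1; [apply gf_pcont| lra| lra| |].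
  - apply IB_le with (fun h => 1 * Rpower h (s - 1)); [apply gf_pcont| apply pcont_scal, pcont_rp| |].
    + intros h Hh Hh1. unfold f. rewrite Rmult_1_l.
      assert (exp (- h) <= 1) by (rewrite <- exp_0; apply exp_le'; lra).
      assert (0 < Rpower h (s - 1)) by apply rp_pos. nra.
    + apply IB_pow0; lra.
  - apply IBi_le with (fun h => 27 * Rpower h (s - 4)); [apply gf_pcont| apply pcont_scal, pcont_rp| |].
    + intros h Hh Hh1. unfold f.
      assert (h ^ 3 <= 27 * exp h) by (apply exp_cube; lra).
      replace (Rpower h (s - 4)) with (Rpower h (s - 1) * / (h ^ 3)).
      2:{ rewrite <- (Rpower_pow 3 h) by lra. rewrite rp_inv, <- rp_plus. f_equal. simpl. lra. }
      rewrite exp_Ropp.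
      assert (0 < Rpower h (s - 1)) by apply rp_pos.
      assert (0 < h ^ 3) by (apply pow_lt; lra).
      assert (0 < exp h) by apply exp_pos.
      assert (/ exp h <= 27 * / h ^ 3).
      { apply Rmult_le_reg_r with (exp h * h ^ 3). nra.
        field_simplify; try lra. }
      nra.
    + apply IBi_pow; lra.
Qed.

Lemma Gamma_pos_pos : 0 < Gamma_pos s.
Proof.
  destruct (ipos_spec f _ gf_pcont (fun x Hx => Rlt_le _ _ (gf_pos x Hx)) gf_IBi) as (H1 & H2 & H3).
  unfold Gamma_pos. fold f.
  replace (epsilon (inhabits 0) (fun g => ImpIntPos f g)) with (ipos f) by reflexivity.
  apply Rlt_le_trans with (RInt f 1 2); [| apply H3; lra].
  apply RInt_gt_0; [lra| intros; apply gf_pos; lra| intros; apply gf_pcont; lra].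
Qed.
End GammaSec.

Lemma c_beta_pos beta : 0 < beta < 2 -> 0 < c_beta beta.
Proof.
  intros Hb. unfold c_beta.
  assert (G1 : 0 < Gamma ((1 + beta) / 2)).
  { unfold Gamma. destruct (Rlt_dec 0 ((1 + beta) / 2)); [| lra]. apply Gamma_pos_pos; lra. }
  assert (G2 : 0 < Rabs (Gamma (- beta / 2))).
  { unfold Gamma. destruct (Rlt_dec 0 (- beta / 2)); [lra|].
    apply Rabs_pos_lt. unfold Rdiv at 1. apply Rmult_integral_contrapositive; split.
    - assert (0 < Gamma_pos (- beta / 2 + 1)) by (apply Gamma_pos_pos; lra). lra.
    - apply Rinv_neq_0_compat; lra. }
  assert (0 < sqrt PI) by (apply sqrt_lt_R0, PI_RGT_0).
  assert (0 < Rpower 2 beta) by apply rp_pos.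
  apply Rdiv_lt_0_compat; [apply Rmult_lt_0_compat; auto| apply Rmult_lt_0_compat; auto].
Qed.

Lemma cont_eps f x0 : continuity_pt f x0 -> forall e, 0 < e -> exists d, 0 < d /\
  forall y, Rabs (y - x0) < d -> Rabs (f y - f x0) < e.
Proof.
  intros H e He. unfold continuity_pt, continue_in, limit1_in, limit_in in H.
  destruct (H e He) as (d & Hd & K). exists d; split; auto.
  intros y Hy. destruct (Req_dec y x0) as [->|Hne].
  - rewrite Rminus_diag, Rabs_R0; auto.
  - apply (K y). split; [split; [exact I| auto]| exact Hy].
Qed.

Lemma dpl_loc f g x l d : 0 < d -> (forall y, Rabs (y - x) < d -> f y = g y) ->
  derivable_pt_lim g x l -> derivable_pt_lim f x l.
Proof.
  intros Hd Heq H e He. destruct (H e He) as [del K].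
  assert (Hm : 0 < Rmin del d) by (apply Rmin_glb_lt; auto; apply cond_pos).
  exists (mkposreal _ Hm). intros h Hh Hhd. simpl in Hhd.
  assert (Rabs h < del) by (apply Rlt_le_trans with (Rmin del d); auto; apply Rmin_l).
  assert (Rabs h < d) by (apply Rlt_le_trans with (Rmin del d); auto; apply Rmin_r).
  rewrite (Heq (x + h)), (Heq x). apply K; auto.
  rewrite Rminus_diag, Rabs_R0; auto. replace (x + h - x) with h by ring; auto.
Qed.

Lemma apow_pos x p : x <> 0 -> apow x p = Rpower (Rabs x) p.
Proof. intros H; unfold apow; destruct (Rlt_dec 0 (Rabs x)) as [|n]; auto.
  exfalso; apply n; apply Rabs_pos_lt; auto. Qed.

Lemma apow_0 p : apow 0 p = 0.
Proof. unfold apow; rewrite Rabs_R0; destruct (Rlt_dec 0 0); auto; lra. Qed.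

Lemma rp_bound_2 t r k : 0 < r -> r / 2 <= t <= 3 * r / 2 -> -1 <= k <= 1 ->
  Rpower t k <= 2 * Rpower r k.
Proof.
  intros Hr Ht Hk. destruct (Rle_dec 0 k).
  - apply Rle_trans with (Rpower (3 / 2 * r) k). apply rp_mono_base; lra.
    rewrite rp_mult_base by lra. apply Rmult_le_compat_r; [left; apply rp_pos|].
    apply Rle_trans with (Rpower (3/2) 1). apply rp_mono_exp; lra. rewrite rp_1; lra.
  - apply Rle_trans with (Rpower (/ 2 * r) k). apply rp_anti_base; lra.
    rewrite rp_mult_base by lra. apply Rmult_le_compat_r; [left; apply rp_pos|].
    replace (Rpower (/ 2) k) with (Rpower 2 (- k)).
    2:{ unfold Rpower. f_equal. rewrite ln_Rinv by lra. ring. }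
    apply Rle_trans with (Rpower 2 1). apply rp_mono_exp; lra. rewrite rp_1; lra.
Qed.

Section USec.
Variables (beta Lam delta eps : R) (u u' : R -> R).
Hypothesis Hb : 0 < beta < 2.
Hypothesis HL : 0 < Lam.
Hypothesis Hd : 0 < delta.
Hypothesis Hbd : 1 < beta + delta.
Hypothesis He : 0 < eps.
Hypothesis He2 : eps < beta / 2.
Hypothesis Hder : forall x, derivable_pt_lim u x (u' x).
Hypothesis Hcont : continuity u'.
Hypothesis Hu'1 : forall x, Rabs x < 1 -> Rabs (u' x) <= Lam * apow x (beta + delta - 1).
Hypothesis Hev : forall x, u (- x) = u x.
Hypothesis Hout : forall x, 1 <= Rabs x -> u x = Rpower (Rabs x) (beta - eps).
Hypothesis Hin : forall x, Rabs x < 1 -> 0 <= u x <= Lam * apow x (beta + delta).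

Let al := beta - eps.

Lemma u0 : u 0 = 0.
Proof. destruct (Hin 0) as [H1 H2]. rewrite Rabs_R0; lra. rewrite apow_0 in H2. lra. Qed.

Lemma u_nn x : 0 <= u x.
Proof.
  destruct (Rlt_dec (Rabs x) 1). apply Hin; auto.
  rewrite Hout by lra. left; apply rp_pos.
Qed.

Lemma u_contpt x : continuity_pt u x.
Proof. apply derivable_continuous_pt. exists (u' x). apply Hder. Qed.

Lemma u_cont x : continuous u x.
Proof. apply continuity_pt_filterlim, u_contpt. Qed.

Lemma u'_odd x : u' (- x) = - u' x.
Proof.
  assert (H : derivable_pt_lim (fun y => u (- y)) x (u' (- x) * (-1))).
  { apply (derivable_pt_lim_comp Ropp u x (-1) (u' (- x))).
    - exact (derivable_pt_lim_opp id x 1 (derivable_pt_lim_id x)).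
    - apply Hder. }
  assert (H2 : derivable_pt_lim (fun y => u (- y)) x (u' x)).
  { apply (dpl_loc _ u x _ 1); [lra| intros; apply Hev| apply Hder]. }
  assert (E := uniqueness_limite _ _ _ _ H H2). lra.
Qed.

Lemma u'_0 : u' 0 = 0.
Proof. assert (H := u'_odd 0). rewrite Ropp_0 in H. lra. Qed.

Lemma u'_gt1 x : 1 < x -> u' x = al * Rpower x (al - 1).
Proof.
  intros Hx. apply (uniqueness_limite u x). apply Hder.
  apply (dpl_loc _ (fun y => Rpower y al) x _ (x - 1)); [lra| |].
  - intros y Hy. rewrite Hout; rewrite Rabs_right; unfold al; auto;
      apply Rabs_def2 in Hy; lra.
  - apply derivable_pt_lim_power; lra.
Qed.

Lemma u'_1 : u' 1 = al.
Proof.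
  apply Rle_antisym; apply Rnot_lt_le; intros Hlt.
  - set (eta := (u' 1 - al) / 3).
    assert (Heta : 0 < eta) by (unfold eta; lra).
    destruct (cont_eps u' 1 (Hcont 1) eta Heta) as (d1 & Hd1 & K1).
    assert (Hc : continuity_pt (fun y => al * Rpower y (al - 1)) 1).
    { apply derivable_continuous_pt. exists (al * ((al - 1) * Rpower 1 (al - 1 - 1))).
      apply derivable_pt_lim_scal, derivable_pt_lim_power; lra. }
    destruct (cont_eps _ 1 Hc eta Heta) as (d2 & Hd2 & K2).
    set (y := 1 + Rmin d1 d2 / 2).
    assert (0 < Rmin d1 d2) by (apply Rmin_glb_lt; auto).
    assert (Rmin d1 d2 <= d1) by apply Rmin_l. assert (Rmin d1 d2 <= d2) by apply Rmin_r.
    assert (Hy1 : Rabs (y - 1) < d1) by (unfold y; rewrite Rabs_right; lra).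
    assert (Hy2 : Rabs (y - 1) < d2) by (unfold y; rewrite Rabs_right; lra).
    specialize (K1 y Hy1). specialize (K2 y Hy2). simpl in K2.
    rewrite rp_one, Rmult_1_r in K2. rewrite u'_gt1 in K1 by (unfold y; lra).
    apply Rabs_def2 in K1. apply Rabs_def2 in K2. unfold eta in *; lra.
  - set (eta := (al - u' 1) / 3).
    assert (Heta : 0 < eta) by (unfold eta; lra).
    destruct (cont_eps u' 1 (Hcont 1) eta Heta) as (d1 & Hd1 & K1).
    assert (Hc : continuity_pt (fun y => al * Rpower y (al - 1)) 1).
    { apply derivable_continuous_pt. exists (al * ((al - 1) * Rpower 1 (al - 1 - 1))).
      apply derivable_pt_lim_scal, derivable_pt_lim_power; lra. }
    destruct (cont_eps _ 1 Hc eta Heta) as (d2 & Hd2 & K2).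
    set (y := 1 + Rmin d1 d2 / 2).
    assert (0 < Rmin d1 d2) by (apply Rmin_glb_lt; auto).
    assert (Rmin d1 d2 <= d1) by apply Rmin_l. assert (Rmin d1 d2 <= d2) by apply Rmin_r.
    assert (Hy1 : Rabs (y - 1) < d1) by (unfold y; rewrite Rabs_right; lra).
    assert (Hy2 : Rabs (y - 1) < d2) by (unfold y; rewrite Rabs_right; lra).
    specialize (K1 y Hy1). specialize (K2 y Hy2). simpl in K2.
    rewrite rp_one, Rmult_1_r in K2. rewrite u'_gt1 in K1 by (unfold y; lra).
    apply Rabs_def2 in K1. apply Rabs_def2 in K2. unfold eta in *; lra.
Qed.

Lemma u'_out x : 1 <= Rabs x -> Rabs (u' x) = al * Rpower (Rabs x) (al - 1).
Proof.
  intros Hx.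
  assert (Hpos : forall y, 1 <= y -> Rabs (u' y) = al * Rpower y (al - 1)).
  { intros y Hy. destruct (Rle_lt_or_eq_dec 1 y Hy) as [Hl|<-].
    - rewrite u'_gt1 by auto. rewrite Rabs_right; auto.
      assert (0 < Rpower y (al - 1)) by apply rp_pos. assert (0 < al) by (unfold al; lra). nra.
    - rewrite u'_1, rp_one. rewrite Rabs_right; unfold al; lra. }
  destruct (Rle_dec 0 x).
  - rewrite (Rabs_right x) in * by lra. apply Hpos; auto.
  - rewrite (Rabs_left x) in * by lra. rewrite <- (Ropp_involutive x) at 1.
    rewrite u'_odd, Rabs_Ropp. apply Hpos; lra.
Qed.

Lemma ub x e : al <= e <= beta + delta -> x <> 0 -> u x <= (Lam + 1) * Rpower (Rabs x) e.
Proof.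
  intros Hexp Hx. assert (Hax : 0 < Rabs x) by (apply Rabs_pos_lt; auto).
  assert (0 < Rpower (Rabs x) e) by apply rp_pos.
  destruct (Rlt_dec (Rabs x) 1).
  - destruct (Hin x) as [_ Hh]; auto. rewrite apow_pos in Hh by auto.
    assert (Rpower (Rabs x) (beta + delta) <= Rpower (Rabs x) e) by (apply rp_anti_exp; lra).
    nra.
  - rewrite Hout by lra.
    assert (Rpower (Rabs x) (beta - eps) <= Rpower (Rabs x) e) by (apply rp_mono_exp; unfold al in *; lra).
    nra.
Qed.

Lemma u'b x e : al <= e <= beta + delta -> x <> 0 -> Rabs (u' x) <= (Lam + 2) * Rpower (Rabs x) (e - 1).
Proof.
  intros Hexp Hx. assert (Hax : 0 < Rabs x) by (apply Rabs_pos_lt; auto).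
  assert (0 < Rpower (Rabs x) (e - 1)) by apply rp_pos.
  destruct (Rlt_dec (Rabs x) 1).
  - specialize (Hu'1 x r). rewrite apow_pos in Hu'1 by auto.
    assert (Rpower (Rabs x) (beta + delta - 1) <= Rpower (Rabs x) (e - 1)) by (apply rp_anti_exp; lra).
    nra.
  - rewrite u'_out by lra.
    assert (Rpower (Rabs x) (al - 1) <= Rpower (Rabs x) (e - 1)) by (apply rp_mono_exp; lra).
    assert (0 < al < 2) by (unfold al; lra).
    nra.
Qed.

Lemma u_mvt x y M : (forall c, Rmin x y <= c <= Rmax x y -> Rabs (u' c) <= M) ->
  Rabs (u y - u x) <= M * Rabs (y - x).
Proof.
  intros HM. destruct (MVT_abs u u' x y) as (c & Hc & Hcr).
  - intros; apply Hder.
  - rewrite Hc. apply Rmult_le_compat_r; [apply Rabs_pos| apply HM; auto].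
Qed.

End USec.

Record UH (beta Lam delta eps : R) (u u' : R -> R) : Prop := mkUH {
  uh_b : 0 < beta < 2;
  uh_L : 0 < Lam;
  uh_d : 0 < delta;
  uh_bd : 1 < beta + delta;
  uh_e : 0 < eps;
  uh_e2 : eps < beta / 2;
  uh_der : forall x, derivable_pt_lim u x (u' x);
  uh_cont : continuity u';
  uh_u'1 : forall x, Rabs x < 1 -> Rabs (u' x) <= Lam * apow x (beta + delta - 1);
  uh_ev : forall x, u (- x) = u x;
  uh_out : forall x, 1 <= Rabs x -> u x = Rpower (Rabs x) (beta - eps);
  uh_in : forall x, Rabs x < 1 -> 0 <= u x <= Lam * apow x (beta + delta)
}.

Lemma UH_of_adm beta Lam delta eps u : 0 < beta < 2 -> 0 < Lam -> 0 < delta -> 1 < beta + delta ->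
  admissible beta Lam delta eps u -> exists u', UH beta Lam delta eps u u'.
Proof.
  intros Hb HL Hd Hbd (He & He2 & _ & (u' & H1 & H2 & H3) & H4 & H5 & H6).
  exists u'. constructor; auto.
Qed.

Section W.
Variables (beta Lam delta eps : R) (u u' : R -> R).
Hypothesis H : UH beta Lam delta eps u u'.

Lemma W_u0 : u 0 = 0.
Proof. destruct H; eapply u0; eauto. Qed.
Lemma W_nn x : 0 <= u x.
Proof. destruct H; eapply u_nn; eauto. Qed.
Lemma W_contpt x : continuity_pt u x.
Proof. destruct H; eapply u_contpt; eauto. Qed.
Lemma W_cont x : continuous u x.
Proof. destruct H; eapply u_cont; eauto. Qed.
Lemma W_u'0 : u' 0 = 0.
Proof. destruct H; eapply u'_0; eauto. Qed.
Lemma W_ub x e : beta - eps <= e <= beta + delta -> x <> 0 -> u x <= (Lam + 1) * Rpower (Rabs x) e.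
Proof. destruct H; eapply ub; eauto. Qed.
Lemma W_u'b x e : beta - eps <= e <= beta + delta -> x <> 0 -> Rabs (u' x) <= (Lam + 2) * Rpower (Rabs x) (e - 1).
Proof. destruct H; eapply u'b; eauto. Qed.
Lemma W_mvt x y M : (forall c, Rmin x y <= c <= Rmax x y -> Rabs (u' c) <= M) ->
  Rabs (u y - u x) <= M * Rabs (y - x).
Proof. destruct H; eapply u_mvt; eauto. Qed.
Lemma W_ev x : u (- x) = u x.
Proof. destruct H; auto. Qed.
Lemma W_out x : 1 <= Rabs x -> u x = Rpower (Rabs x) (beta - eps).
Proof. destruct H; auto. Qed.
End W.

Lemma ImpIntPos_ext f g l : (forall x, 0 < x -> f x = g x) -> ImpIntPos f l -> ImpIntPos g l.
Proof.
  intros Heq H e He. destruct (H e He) as (a0 & b0 & Ha0 & K).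
  exists a0, (Rmax b0 a0). split; auto.
  intros a b Ha Hb.
  assert (b0 <= Rmax b0 a0) by apply Rmax_l. assert (a0 <= Rmax b0 a0) by apply Rmax_r.
  destruct (K a b) as [pr Hpr]; [lra| lra|].
  assert (Hf : ex_RInt f a b) by (apply ex_RInt_Reals_1; exact pr).
  assert (Hg : ex_RInt g a b).
  { apply (ex_RInt_ext f); auto. intros x Hx. rewrite Rmin_left in Hx by lra. apply Heq; lra. }
  exists (ex_RInt_Reals_0 _ _ _ Hg). rewrite <- RInt_Reals.
  rewrite <- (RInt_ext f g). 2:{ intros x Hx. rewrite Rmin_left in Hx by lra. apply Heq; lra. }
  rewrite (RInt_Reals f a b pr). auto.
Qed.

Lemma pcont_of f : (forall x, 0 < x -> continuity_pt f x) -> pcont f.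
Proof. intros H x Hx; apply continuity_pt_filterlim, H; auto. Qed.

Lemma rp_contpt x e : 0 < x -> continuity_pt (fun y => Rpower y e) x.
Proof. intros; apply derivable_continuous_pt. exists (e * Rpower x (e - 1)). apply derivable_pt_lim_power; auto. Qed.

Section FL.
Variables (beta Lam delta eps : R) (u u' : R -> R).
Hypothesis H : UH beta Lam delta eps u u'.
Let p := 1 + beta.
Let al := beta - eps.

Let f := fun h => 2 * u h * Rpower h (- p).

Lemma fl_pcont : pcont f.
Proof.
  apply pcont_of; intros x Hx. unfold f.
  apply continuity_pt_mult. apply continuity_pt_mult. apply continuity_pt_const; intros ? ?; auto.
  apply (W_contpt _ _ _ _ _ _ H). apply rp_contpt; auto.
Qed.

Lemma fl_pnn : pnn f.
Proof.
  intros x Hx; unfold f. assert (0 <= u x) by (apply (W_nn _ _ _ _ _ _ H)).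
  assert (0 < Rpower x (- p)) by apply rp_pos. nra.
Qed.

Lemma fl_bound h e : 0 < h -> beta - eps <= e <= beta + delta -> f h <= 2 * (Lam + 1) * Rpower h (e - p).
Proof.
  intros Hh He. unfold f.
  assert (Hu := W_ub _ _ _ _ _ _ H h e He ltac:(lra)). rewrite Rabs_right in Hu by lra.
  assert (0 < Rpower h (- p)) by apply rp_pos.
  replace (e - p) with (e + - p) by ring. rewrite rp_plus. nra.
Qed.

Lemma fl_IBi : IBi f 0 (2 * (Lam + 1) * Rpower 1 (beta + delta - p + 1) / (beta + delta - p + 1)
   + 2 * (Lam + 1) * Rpower 1 (beta - eps - p + 1) / (- (beta - eps - p + 1))).
Proof.
  destruct H.
  apply IBi_split with 1; [apply fl_pcont| lra| lra| |].
  - apply IB_le with (fun h => 2 * (Lam + 1) * Rpower h (beta + delta - p)); [apply fl_pcont| apply pcont_scal, pcont_rp| |].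
    + intros h Hh _. apply fl_bound; auto; lra.
    + apply IB_pow0; unfold p; lra.
  - apply IBi_le with (fun h => 2 * (Lam + 1) * Rpower h (beta - eps - p)); [apply fl_pcont| apply pcont_scal, pcont_rp| |].
    + intros h Hh _. apply fl_bound; auto; lra.
    + apply IBi_pow; unfold p; lra.
Qed.

Lemma fl_lower : 2 / eps <= ipos f.
Proof.
  destruct (ipos_spec f _ fl_pcont fl_pnn fl_IBi) as (_ & _ & H3).
  assert (He : 0 < eps) by (destruct H; auto).
  apply Rnot_lt_le; intros Hlt.
  set (eta := (2 / eps - ipos f) * eps / 4).
  assert (Heta : 0 < eta).
  { unfold eta. apply Rmult_lt_0_compat; [apply Rmult_lt_0_compat|]; lra. }
  assert (Heta1 : eta < 1).
  { unfold eta. assert (0 <= ipos f) by (apply Rle_trans with (RInt f 1 1); [rewrite RInt_point'; lra| apply H3; lra]).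
    assert (2 / eps * eps = 2) by (field; lra). nra. }
  set (b := Rpower (/ eta) (/ eps)).
  assert (Hb1 : 1 < b) by (unfold b; apply rp_gt1; [rewrite <- Rinv_1; apply Rinv_lt_contravar; lra| apply Rinv_0_lt_compat; lra]).
  assert (Hbe : Rpower b (- eps) = eta).
  { unfold b. rewrite rp_pow_rp by (apply Rinv_0_lt_compat; lra).
    replace (/ eps * - eps) with (Ropp 1) by (field; lra). rewrite Rpower_Ropp, rp_1 by (apply Rinv_0_lt_compat; lra).
    apply Rinv_inv. }
  assert (Hint : RInt f 1 b = 2 * (1 - eta) / eps).
  { rewrite (RInt_ext _ (fun h => 2 * Rpower h (- 1 - eps))).
    2:{ intros x Hx. rewrite Rmin_left, Rmax_right in Hx by lra. unfold f.
        rewrite (W_out _ _ _ _ _ _ H) by (rewrite Rabs_right; lra). rewrite Rabs_right by lra.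
        rewrite Rmult_assoc, <- rp_plus. f_equal. f_equal. unfold p; ring. }
    rewrite RInt_scal' by (apply exR; [apply pcont_rp| lra| lra]).
    rewrite RInt_rp by lra. replace (-1 - eps + 1) with (- eps) by ring.
    rewrite Hbe, rp_one. assert (E : 2 * ((eta - 1) / - eps) = 2 * (1 - eta) / eps) by (field; lra). exact E. }
  assert (RInt f 1 b <= ipos f) by (apply H3; lra).
  rewrite Hint in H0. unfold eta in H0.
  assert (2 * (1 - (2 / eps - ipos f) * eps / 4) / eps = 2 / eps - (2 / eps - ipos f) / 2) by (field; lra).
  lra.
Qed.

Lemma frac_part : exists L, frac_lap_at beta u 0 L /\ 4 * c_beta beta / eps <= L.
Proof.
  destruct (ipos_spec f _ fl_pcont fl_pnn fl_IBi) as (H1 & _ & _).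
  assert (Hlow := fl_lower).
  assert (Hc : 0 < c_beta beta) by (apply c_beta_pos; destruct H; auto).
  exists (c_beta beta * (ipos f + ipos f)). split.
  - exists (ipos f + ipos f). split; auto.
    exists (ipos f), (ipos f). split; [| split; auto].
    + apply (ImpIntPos_ext f); auto. intros x Hx.
      rewrite (W_u0 _ _ _ _ _ _ H). rewrite Rplus_0_l, Rminus_0_l, (W_ev _ _ _ _ _ _ H).
      rewrite apow_pos by lra. rewrite Rabs_right by lra. unfold f.
      rewrite <- rp_inv. unfold p. field. apply Rgt_not_eq, rp_pos.
    + apply (ImpIntPos_ext f); auto. intros x Hx.
      rewrite (W_u0 _ _ _ _ _ _ H). rewrite Rplus_0_l, Rminus_0_l, Ropp_involutive, (W_ev _ _ _ _ _ _ H).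
      rewrite apow_pos by lra. rewrite Rabs_Ropp, Rabs_right by lra. unfold f.
      rewrite <- rp_inv. unfold p. field. apply Rgt_not_eq, rp_pos.
  - assert (4 * c_beta beta / eps = c_beta beta * (2 / eps + 2 / eps)) by (field; destruct H; lra).
    rewrite H0. apply Rmult_le_compat_l; lra.
Qed.
End FL.

Definition Dd (u : R -> R) (s h : R) := u (h + s) - u h - u s.

Lemma sq2 a b : (a - b) ^ 2 <= 2 * a ^ 2 + 2 * b ^ 2.
Proof. assert (0 <= (a + b) ^ 2) by apply pow2_ge_0. nra. Qed.

Lemma sq3 a b c : (a - b - c) ^ 2 <= 3 * (a ^ 2 + b ^ 2 + c ^ 2).
Proof. assert (0 <= (a + b) ^ 2) by apply pow2_ge_0. assert (0 <= (a + c) ^ 2) by apply pow2_ge_0.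
  assert (0 <= (b - c) ^ 2) by apply pow2_ge_0. nra. Qed.

Lemma abs_sq_le x M : Rabs x <= M -> x ^ 2 <= M ^ 2.
Proof. intros H. assert (0 <= Rabs x) by apply Rabs_pos.
  replace (x ^ 2) with (Rabs x ^ 2) by (apply pow2_abs).
  apply pow_incr; lra. Qed.

Section PW.
Variables (beta Lam delta eps : R) (u u' : R -> R).
Hypothesis H : UH beta Lam delta eps u u'.
Variable e : R.
Hypothesis Hexp : beta - eps <= e <= beta + delta.
Hypothesis Hexp2 : e <= 2.

Lemma PA s h : s <> 0 -> 0 < h -> h <= Rabs s / 2 ->
  Dd u s h ^ 2 <= 8 * (Lam + 2) ^ 2 * Rpower (Rabs s) (2 * e - 2) * h ^ 2
                 + 2 * (Lam + 1) ^ 2 * Rpower h (2 * e).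
Proof.
  intros Hs Hh Hhr. set (r := Rabs s) in *.
  assert (Hr : 0 < r) by (apply Rabs_pos_lt; auto).
  pose proof H as H'; destruct H' as [Hb HL Hd Hbd He He2 _ _ _ _ _ _].
  assert (HX : Rabs (u (h + s) - u s) <= (2 * (Lam + 2) * Rpower r (e - 1)) * Rabs (h + s - s)).
  { apply (W_mvt _ _ _ _ _ _ H). intros c Hc.
    assert (Hcr : r / 2 <= Rabs c <= 3 * r / 2).
    { unfold r in *. destruct (Rle_dec 0 s).
      - rewrite Rmin_left, Rmax_right in Hc by lra. rewrite (Rabs_right s) in * by lra.
        rewrite Rabs_right by lra. lra.
      - rewrite Rmin_left, Rmax_right in Hc by lra. rewrite (Rabs_left s) in * by lra.
        rewrite Rabs_left by lra. lra. }
    assert (Hc0 : c <> 0) by (intro; subst; rewrite Rabs_R0 in Hcr; lra).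
    apply Rle_trans with ((Lam + 2) * Rpower (Rabs c) (e - 1)).
    apply (W_u'b _ _ _ _ _ _ H); auto.
    replace (2 * (Lam + 2) * Rpower r (e - 1)) with ((Lam + 2) * (2 * Rpower r (e - 1))) by ring.
    apply Rmult_le_compat_l; [lra|].
    apply rp_bound_2; auto; lra. }
  replace (h + s - s) with h in HX by ring. rewrite (Rabs_right h) in HX by lra.
  assert (HU : u h <= (Lam + 1) * Rpower h e).
  { assert (Hu := W_ub _ _ _ _ _ _ H h e Hexp ltac:(lra)). rewrite Rabs_right in Hu by lra. auto. }
  assert (Hu0 : 0 <= u h) by apply (W_nn _ _ _ _ _ _ H).
  unfold Dd. replace (u (h + s) - u h - u s) with ((u (h + s) - u s) - u h) by ring.
  eapply Rle_trans; [apply sq2|].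
  apply Rplus_le_compat.
  - apply abs_sq_le in HX.
    replace (8 * (Lam + 2) ^ 2 * Rpower r (2 * e - 2) * h ^ 2) with (2 * (2 * (Lam + 2) * Rpower r (e - 1) * h) ^ 2).
    lra. replace (2 * e - 2) with (2 * (e - 1)) by ring. rewrite <- rp_sq. ring.
  - replace (Rpower h (2 * e)) with (Rpower h e ^ 2) by (apply rp_sq).
    assert (0 <= (Lam + 1) * Rpower h e).
    { assert (0 < Rpower h e) by apply rp_pos. nra. }
    assert (u h ^ 2 <= ((Lam + 1) * Rpower h e) ^ 2) by (apply pow_incr; lra).
    replace (((Lam + 1) * Rpower h e) ^ 2) with ((Lam + 1) ^ 2 * Rpower h e ^ 2) in H1 by ring.
    lra.
Qed.

Lemma u_small y r : 0 < r -> Rabs y <= 3 * r -> 0 <= u y <= 9 * (Lam + 1) * Rpower r e.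
Proof.
  intros Hr Hy. split; [apply (W_nn _ _ _ _ _ _ H)|].
  pose proof H as H'; destruct H' as [Hb HL Hd Hbd He He2 _ _ _ _ _ _].
  assert (0 < Rpower r e) by apply rp_pos.
  destruct (Req_dec y 0) as [->|Hy0].
  - rewrite (W_u0 _ _ _ _ _ _ H). nra.
  - apply Rle_trans with ((Lam + 1) * Rpower (Rabs y) e). apply (W_ub _ _ _ _ _ _ H); auto.
    assert (0 < Rabs y) by (apply Rabs_pos_lt; auto).
    apply Rle_trans with ((Lam + 1) * Rpower (3 * r) e).
    + apply Rmult_le_compat_l; [lra|]. apply rp_mono_base; lra.
    + rewrite rp_mult_base by lra.
      assert (Rpower 3 e <= Rpower 3 2) by (apply rp_mono_exp; lra).
      assert (Rpower 3 2 = 9) by (replace 2 with (INR 2) by (simpl; ring); rewrite Rpower_pow by lra; simpl; ring).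
      assert (0 < Rpower 3 e) by apply rp_pos.
      assert (Rpower 3 e * Rpower r e <= 9 * Rpower r e) by (apply Rmult_le_compat_r; lra). nra.
Qed.

Lemma PB s h : s <> 0 -> 0 < h -> h <= 2 * Rabs s ->
  Dd u s h ^ 2 <= 729 * (Lam + 1) ^ 2 * Rpower (Rabs s) (2 * e).
Proof.
  intros Hs Hh Hhr. set (r := Rabs s) in *.
  assert (Hr : 0 < r) by (apply Rabs_pos_lt; auto).
  destruct (u_small (h + s) r) as [A1 A2]; auto.
  { apply Rle_trans with (Rabs h + Rabs s). apply Rabs_triang. rewrite Rabs_right by lra. unfold r in *; lra. }
  destruct (u_small h r) as [B1 B2]; auto. { rewrite Rabs_right by lra. lra. }
  destruct (u_small s r) as [C1 C2]; auto. { unfold r in *; lra. }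
  unfold Dd. eapply Rle_trans; [apply sq3|].
  set (M := 9 * (Lam + 1) * Rpower r e) in *.
  assert (u (h + s) ^ 2 <= M ^ 2) by (apply pow_incr; lra).
  assert (u h ^ 2 <= M ^ 2) by (apply pow_incr; lra).
  assert (u s ^ 2 <= M ^ 2) by (apply pow_incr; lra).
  replace (729 * (Lam + 1) ^ 2 * Rpower r (2 * e)) with (9 * M ^ 2).
  lra. unfold M. rewrite <- rp_sq. ring.
Qed.

Variable e2 : R.
Hypothesis Hexp3 : beta - eps <= e2 <= beta + delta.
Hypothesis Hexp4 : e2 <= 2.

Lemma PC s h : s <> 0 -> 2 * Rabs s <= h ->
  Dd u s h ^ 2 <= 8 * (Lam + 2) ^ 2 * Rpower (Rabs s) 2 * Rpower h (2 * e2 - 2)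
                 + 2 * (Lam + 1) ^ 2 * Rpower (Rabs s) (2 * e).
Proof.
  intros Hs Hhr. set (r := Rabs s) in *.
  assert (Hr : 0 < r) by (apply Rabs_pos_lt; auto).
  pose proof H as H'; destruct H' as [Hb HL Hd Hbd He He2 _ _ _ _ _ _].
  assert (HY : Rabs (u (h + s) - u h) <= (2 * (Lam + 2) * Rpower h (e2 - 1)) * Rabs (h + s - h)).
  { apply (W_mvt _ _ _ _ _ _ H). intros c Hc.
    assert (Hcr : h / 2 <= Rabs c <= 3 * h / 2).
    { unfold r in *. destruct (Rle_dec 0 s).
      - rewrite Rmin_left, Rmax_right in Hc by lra. rewrite (Rabs_right s) in * by lra.
        rewrite Rabs_right by lra. lra.
      - rewrite Rmin_right, Rmax_left in Hc by lra. rewrite (Rabs_left s) in * by lra.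
        rewrite Rabs_right by lra. lra. }
    assert (Hc0 : c <> 0) by (intro; subst; rewrite Rabs_R0 in Hcr; lra).
    apply Rle_trans with ((Lam + 2) * Rpower (Rabs c) (e2 - 1)).
    apply (W_u'b _ _ _ _ _ _ H); auto.
    replace (2 * (Lam + 2) * Rpower h (e2 - 1)) with ((Lam + 2) * (2 * Rpower h (e2 - 1))) by ring.
    apply Rmult_le_compat_l; [lra|].
    apply rp_bound_2; auto; lra. }
  replace (h + s - h) with s in HY by ring. fold r in HY.
  assert (HU : u s <= (Lam + 1) * Rpower r e).
  { apply (W_ub _ _ _ _ _ _ H); auto. }
  assert (Hu0 : 0 <= u s) by apply (W_nn _ _ _ _ _ _ H).
  unfold Dd. replace (u (h + s) - u h - u s) with ((u (h + s) - u h) - u s) by ring.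
  eapply Rle_trans; [apply sq2|].
  apply Rplus_le_compat.
  - apply abs_sq_le in HY.
    replace (8 * (Lam + 2) ^ 2 * Rpower r 2 * Rpower h (2 * e2 - 2)) with (2 * (2 * (Lam + 2) * Rpower h (e2 - 1) * r) ^ 2).
    lra. replace (2 * e2 - 2) with (2 * (e2 - 1)) by ring. rewrite <- rp_sq.
    replace (Rpower r 2) with (r ^ 2). ring.
    replace 2 with (INR 2) by (simpl; ring). rewrite Rpower_pow by lra. auto.
  - replace (Rpower r (2 * e)) with (Rpower r e ^ 2) by (apply rp_sq).
    assert (0 <= (Lam + 1) * Rpower r e).
    { assert (0 < Rpower r e) by apply rp_pos. nra. }
    assert (u s ^ 2 <= ((Lam + 1) * Rpower r e) ^ 2) by (apply pow_incr; lra).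
    replace (((Lam + 1) * Rpower r e) ^ 2) with ((Lam + 1) ^ 2 * Rpower r e ^ 2) in H0 by ring.
    lra.
Qed.
End PW.

Definition gs (beta : R) (u : R -> R) (s h : R) :=
  Dd u s h ^ 2 * Rpower h (- (1 + beta)) * Rpower (Rabs s) (- (1 + beta)).

Lemma rp_half r k : 0 < r -> 0 <= k -> Rpower (r / 2) k <= Rpower r k.
Proof. intros; apply rp_mono_base; lra. Qed.

Lemma rp_double r k : 0 < r -> k <= 0 -> Rpower (2 * r) k <= Rpower r k.
Proof. intros; apply rp_anti_base; lra. Qed.

Lemma rp_half_neg r k : 0 < r -> -2 <= k <= 0 -> Rpower (r / 2) k <= 4 * Rpower r k.
Proof.
  intros Hr Hk. replace (r / 2) with (/ 2 * r) by field. rewrite rp_mult_base by lra.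
  apply Rmult_le_compat_r; [left; apply rp_pos|].
  replace (Rpower (/ 2) k) with (Rpower 2 (- k)).
  2:{ unfold Rpower. f_equal. rewrite ln_Rinv by lra. ring. }
  apply Rle_trans with (Rpower 2 2). apply rp_mono_exp; lra.
  replace 2 with (INR 2) at 2 by (simpl; ring). rewrite Rpower_pow by lra. simpl; lra.
Qed.

Lemma cpt_sq f x : continuity_pt f x -> continuity_pt (fun y => f y ^ 2) x.
Proof. intros Hf. apply (continuity_pt_comp f (fun z => z ^ 2)); auto.
  apply derivable_continuous_pt, derivable_pt_pow. Qed.

Section GB.
Variables (beta Lam delta eps : R) (u u' : R -> R).
Hypothesis H : UH beta Lam delta eps u u'.
Let p := 1 + beta.

Lemma gs_pcont s : pcont (gs beta u s).
Proof.
  apply pcont_of; intros x Hx. unfold gs, Dd.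
  assert (Hc : forall y, continuity_pt u y) by (intros; apply (W_contpt _ _ _ _ _ _ H)).
  apply continuity_pt_mult; [apply continuity_pt_mult|].
  - apply (cpt_sq (fun h => u (h + s) - u h - u s)).
    apply continuity_pt_minus; [apply continuity_pt_minus|].
    + apply (continuity_pt_comp (fun h => h + s) u). apply continuity_pt_plus.
      apply continuity_pt_id. apply continuity_pt_const; intros ? ?; auto. apply Hc.
    + apply Hc.
    + apply continuity_pt_const; intros ? ?; auto.
  - apply rp_contpt; auto.
  - apply continuity_pt_const; intros ? ?; auto.
Qed.

Lemma gs_pnn s : pnn (gs beta u s).
Proof.
  intros x Hx; unfold gs. assert (0 < Rpower x (- (1 + beta))) by apply rp_pos.
  assert (0 < Rpower (Rabs s) (- (1 + beta))) by apply rp_pos.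
  assert (0 <= Dd u s x ^ 2) by apply pow2_ge_0. 
  apply Rmult_le_pos; [apply Rmult_le_pos|]; lra.
Qed.

Lemma gs_le s h X : 0 < h -> Dd u s h ^ 2 <= X ->
  gs beta u s h <= X * Rpower h (- p) * Rpower (Rabs s) (- p).
Proof.
  intros Hh HX. unfold gs. fold p.
  assert (0 < Rpower h (- p)) by apply rp_pos.
  assert (0 < Rpower (Rabs s) (- p)) by apply rp_pos.
  apply Rmult_le_compat_r; [lra|]. apply Rmult_le_compat_r; lra.
Qed.

Lemma rp_comb2 r a b : Rpower r a * Rpower r b = Rpower r (a + b).
Proof. rewrite rp_plus; auto. Qed.

Lemma rp_sq_eq h : 0 < h -> h ^ 2 = Rpower h 2.
Proof. intros; rewrite <- (Rpower_pow 2 h) by lra. f_equal. Qed.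

Lemma IB_A s e : s <> 0 -> beta - eps <= e <= beta + delta -> e <= 2 ->
  IB (gs beta u s) 0 (Rabs s / 2)
    ((8 * (Lam + 2) ^ 2 / (2 - beta) + 2 * (Lam + 1) ^ 2 / (2 * e - beta)) * Rpower (Rabs s) (2 * e - 1 - 2 * beta)).
Proof.
  intros Hs He1 He2. pose proof H as H'; destruct H' as [Hb HL Hd Hbd He He3 _ _ _ _ _ _].
  set (r := Rabs s) in *. assert (Hr : 0 < r) by (apply Rabs_pos_lt; auto).
  set (c1 := 8 * (Lam + 2) ^ 2 * Rpower r (2 * e - 2) * Rpower r (- p)).
  set (c2 := 2 * (Lam + 1) ^ 2 * Rpower r (- p)).
  assert (Hc1 : 0 <= c1) by (unfold c1; assert (0 < Rpower r (2 * e - 2)) by apply rp_pos;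
    assert (0 < Rpower r (- p)) by apply rp_pos; assert (0 <= (Lam + 2) ^ 2) by apply pow2_ge_0;
    apply Rmult_le_pos; [apply Rmult_le_pos|]; lra).
  assert (Hc2 : 0 <= c2) by (unfold c2; assert (0 < Rpower r (- p)) by apply rp_pos;
    assert (0 <= (Lam + 1) ^ 2) by apply pow2_ge_0; apply Rmult_le_pos; lra).
  apply IB_M with (c1 * Rpower (r / 2) (2 - p + 1) / (2 - p + 1) + c2 * Rpower (r / 2) (2 * e - p + 1) / (2 * e - p + 1)).
  2:{ apply IB_le with (fun h => c1 * Rpower h (2 - p) + c2 * Rpower h (2 * e - p)).
      - apply gs_pcont.
      - apply pcont_plus; apply pcont_scal, pcont_rp.
      - intros h Hh Hh2. eapply Rle_trans; [apply gs_le; [lra| apply (PA _ _ _ _ _ _ H e); auto; fold r; lra]|].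
        fold r. unfold c1, c2.
        rewrite (rp_sq_eq h) by lra.
        assert (E1 : Rpower h 2 * Rpower h (- p) = Rpower h (2 - p)) by (rewrite rp_comb2; f_equal; ring).
        assert (E2 : Rpower h (2 * e) * Rpower h (- p) = Rpower h (2 * e - p)) by (rewrite rp_comb2; f_equal; ring).
        rewrite <- E1, <- E2. right; ring.
      - apply IB_plus; try (apply pcont_scal, pcont_rp).
        + apply IB_pow0; auto; unfold p; lra.
        + apply IB_pow0; auto; unfold p; lra. }
  unfold p.
  replace (2 - (1 + beta) + 1) with (2 - beta) by ring.
  replace (2 * e - (1 + beta) + 1) with (2 * e - beta) by ring.
  assert (2 * e - beta > 0) by lra.
  assert (T1 : c1 * Rpower (r / 2) (2 - beta) <= 8 * (Lam + 2) ^ 2 * Rpower r (2 * e - 1 - 2 * beta)).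
  { apply Rle_trans with (c1 * Rpower r (2 - beta)). apply Rmult_le_compat_l; auto. apply rp_half; lra.
    unfold c1. right. rewrite !Rmult_assoc, rp_comb2, rp_comb2. f_equal. f_equal. f_equal. unfold p; ring. }
  assert (T2 : c2 * Rpower (r / 2) (2 * e - beta) <= 2 * (Lam + 1) ^ 2 * Rpower r (2 * e - 1 - 2 * beta)).
  { apply Rle_trans with (c2 * Rpower r (2 * e - beta)). apply Rmult_le_compat_l; auto. apply rp_half; lra.
    unfold c2. right. rewrite !Rmult_assoc, rp_comb2. f_equal. f_equal. f_equal. unfold p; ring. }
  unfold Rdiv. rewrite Rmult_plus_distr_r.
  assert (0 < / (2 - beta)) by (apply Rinv_0_lt_compat; lra).
  assert (0 < / (2 * e - beta)) by (apply Rinv_0_lt_compat; lra).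
  apply Rplus_le_compat.
  - apply Rle_trans with (8 * (Lam + 2) ^ 2 * Rpower r (2 * e - 1 - 2 * beta) * / (2 - beta)).
    apply Rmult_le_compat_r; lra. right; ring.
  - apply Rle_trans with (2 * (Lam + 1) ^ 2 * Rpower r (2 * e - 1 - 2 * beta) * / (2 * e - beta)).
    apply Rmult_le_compat_r; lra. right; ring.
Qed.


Lemma IB_B s e : s <> 0 -> beta - eps <= e <= beta + delta -> e <= 2 ->
  IB (gs beta u s) (Rabs s / 2) (2 * Rabs s)
    (2916 * (Lam + 1) ^ 2 / beta * Rpower (Rabs s) (2 * e - 1 - 2 * beta)).
Proof.
  intros Hs He1 He2. pose proof H as H'; destruct H' as [Hb HL Hd Hbd He He3 _ _ _ _ _ _].
  set (r := Rabs s) in *. assert (Hr : 0 < r) by (apply Rabs_pos_lt; auto).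
  set (c := 729 * (Lam + 1) ^ 2 * Rpower r (2 * e) * Rpower r (- p)).
  assert (Hc : 0 <= c) by (unfold c; assert (0 < Rpower r (2 * e)) by apply rp_pos;
    assert (0 < Rpower r (- p)) by apply rp_pos; assert (0 <= (Lam + 1) ^ 2) by apply pow2_ge_0;
    apply Rmult_le_pos; [apply Rmult_le_pos|]; lra).
  apply IB_M with (c * Rpower (r / 2) (- p + 1) / (- (- p + 1))).
  2:{ apply IB_le with (fun h => c * Rpower h (- p)).
      - apply gs_pcont.
      - apply pcont_scal, pcont_rp.
      - intros h Hh Hh2. eapply Rle_trans; [apply gs_le; [lra| apply (PB _ _ _ _ _ _ H e); auto; fold r; lra]|].
        fold r. unfold c. right; ring.
      - apply IB_of_IBi. apply IBi_pow; auto; unfold p; lra. }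
  unfold p. replace (- (1 + beta) + 1) with (- beta) by ring. replace (- - beta) with beta by ring.
  assert (T : Rpower (r / 2) (- beta) <= 4 * Rpower r (- beta)) by (apply rp_half_neg; lra).
  apply Rle_trans with (c * (4 * Rpower r (- beta)) / beta).
  { unfold Rdiv. apply Rmult_le_compat_r. left; apply Rinv_0_lt_compat; lra. apply Rmult_le_compat_l; auto. }
  unfold c, p. right.
  replace (729 * (Lam + 1) ^ 2 * Rpower r (2 * e) * Rpower r (- (1 + beta)) * (4 * Rpower r (- beta)) / beta)
    with (2916 * (Lam + 1) ^ 2 / beta * (Rpower r (2 * e) * Rpower r (- (1 + beta)) * Rpower r (- beta))) by (field; lra).
  rewrite !rp_comb2. f_equal. f_equal. ring.
Qed.

Lemma IBi_C s e e2 x0 : s <> 0 -> beta - eps <= e <= beta + delta -> e <= 2 ->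
  beta - eps <= e2 <= beta + delta -> 2 * e2 < 2 + beta -> 2 * Rabs s <= x0 ->
  IBi (gs beta u s) x0
    (8 * (Lam + 2) ^ 2 / (2 + beta - 2 * e2) * Rpower (Rabs s) (2 - p) * Rpower x0 (2 * e2 - 2 - beta)
     + 2 * (Lam + 1) ^ 2 / beta * Rpower (Rabs s) (2 * e - p) * Rpower x0 (- beta)).
Proof.
  intros Hs He1 He2 He4 He5 Hx0. pose proof H as H'; destruct H' as [Hb HL Hd Hbd He He3 _ _ _ _ _ _].
  set (r := Rabs s) in *. assert (Hr : 0 < r) by (apply Rabs_pos_lt; auto).
  set (c1 := 8 * (Lam + 2) ^ 2 * Rpower r 2 * Rpower r (- p)).
  set (c2 := 2 * (Lam + 1) ^ 2 * Rpower r (2 * e) * Rpower r (- p)).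
  assert (Hc1 : 0 <= c1) by (unfold c1; assert (0 < Rpower r 2) by apply rp_pos;
    assert (0 < Rpower r (- p)) by apply rp_pos; assert (0 <= (Lam + 2) ^ 2) by apply pow2_ge_0;
    apply Rmult_le_pos; [apply Rmult_le_pos|]; lra).
  assert (Hc2 : 0 <= c2) by (unfold c2; assert (0 < Rpower r (2 * e)) by apply rp_pos;
    assert (0 < Rpower r (- p)) by apply rp_pos; assert (0 <= (Lam + 1) ^ 2) by apply pow2_ge_0;
    apply Rmult_le_pos; [apply Rmult_le_pos|]; lra).
  apply IBi_M with (c1 * Rpower x0 (2 * e2 - 2 - p + 1) / (- (2 * e2 - 2 - p + 1)) + c2 * Rpower x0 (- p + 1) / (- (- p + 1))).
  2:{ apply IBi_le with (fun h => c1 * Rpower h (2 * e2 - 2 - p) + c2 * Rpower h (- p)).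
      - apply gs_pcont.
      - apply pcont_plus; apply pcont_scal, pcont_rp.
      - intros h Hh Hh2. eapply Rle_trans; [apply gs_le; [lra| apply (PC _ _ _ _ _ _ H e He1 e2 He4); auto; fold r; lra]|].
        fold r. unfold c1, c2.
        assert (E1 : Rpower h (2 * e2 - 2) * Rpower h (- p) = Rpower h (2 * e2 - 2 - p)) by (rewrite rp_comb2; f_equal; ring).
        rewrite <- E1. right; ring.
      - apply IBi_plus; try (apply pcont_scal, pcont_rp).
        + apply IBi_pow; auto; unfold p; lra.
        + apply IBi_pow; auto; unfold p; lra. }
  unfold p. right.
  replace (2 * e2 - 2 - (1 + beta) + 1) with (2 * e2 - 2 - beta) by ring.
  replace (- (1 + beta) + 1) with (- beta) by ring.
  unfold c1, c2, p.
  assert (E1 : Rpower r 2 * Rpower r (- (1 + beta)) = Rpower r (2 - (1 + beta))) by (rewrite rp_comb2; f_equal; ring).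
  assert (E2 : Rpower r (2 * e) * Rpower r (- (1 + beta)) = Rpower r (2 * e - (1 + beta))) by (rewrite rp_comb2; f_equal; ring).
  replace (8 * (Lam + 2) ^ 2 * Rpower r 2 * Rpower r (- (1 + beta))) with (8 * (Lam + 2) ^ 2 * (Rpower r 2 * Rpower r (- (1 + beta)))) by ring.
  replace (2 * (Lam + 1) ^ 2 * Rpower r (2 * e) * Rpower r (- (1 + beta))) with (2 * (Lam + 1) ^ 2 * (Rpower r (2 * e) * Rpower r (- (1 + beta)))) by ring.
  rewrite E1, E2. field. lra.
Qed.
End GB.

Lemma div_le_den c a b : 0 <= c -> 0 < a -> a <= b -> c / b <= c / a.
Proof. intros; unfold Rdiv; apply Rmult_le_compat_l; auto; apply Rinv_le_contravar; lra. Qed.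

Section IN.
Variables (beta Lam delta eps : R) (u u' : R -> R).
Hypothesis H : UH beta Lam delta eps u u'.
Hypothesis Heps4 : eps <= beta / 4.
Variable q : R.
Hypothesis Hq1 : beta < q <= beta + delta.
Hypothesis Hq2 : 2 * q < 2 + beta.
Let p := 1 + beta.

Definition Kc := 16 * (Lam + 2) ^ 2 / (2 - beta) + 2924 * (Lam + 1) ^ 2 / beta
                 + 8 * (Lam + 2) ^ 2 / (2 + beta - 2 * q).

Lemma inner_big s : s <> 0 -> 1 / 2 <= Rabs s -> IBi (gs beta u s) 0 (Kc * Rpower (Rabs s) (- 1 - 2 * eps)).
Proof.
  intros Hs Hr2. pose proof H as H'; destruct H' as [Hb HL Hd Hbd He He3 _ _ _ _ _ _].
  assert (Hr : 0 < Rabs s) by (apply Rabs_pos_lt; auto).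
  set (al := beta - eps).
  assert (Hal : beta - eps <= al <= beta + delta) by (unfold al; lra).
  assert (Hal2 : al <= 2) by (unfold al; lra).
  assert (Hal3 : 2 * al < 2 + beta) by (unfold al; lra).
  set (R0 := Rpower (Rabs s) (- 1 - 2 * eps)).
  assert (HR0 : 0 < R0) by apply rp_pos.
  assert (L1 : 0 <= (Lam + 1) ^ 2) by apply pow2_ge_0.
  assert (L2 : 0 <= (Lam + 2) ^ 2) by apply pow2_ge_0.
  assert (EA : 2 * al - 1 - 2 * beta = - 1 - 2 * eps) by (unfold al; ring).
  eapply IBi_M; [| eapply (IBi_split _ (gs_pcont _ _ _ _ _ _ H s)) with (y := Rabs s / 2); [lra| lra| apply (IB_A _ _ _ _ _ _ H s al); auto|]].
  2:{ eapply (IBi_split _ (gs_pcont _ _ _ _ _ _ H s)) with (y := 2 * Rabs s); [lra| lra| apply (IB_B _ _ _ _ _ _ H s al); auto|].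
      apply (IBi_C _ _ _ _ _ _ H s al al); auto; lra. }
  rewrite EA. fold R0.
  assert (tA : 2 * (Lam + 1) ^ 2 / (2 * al - beta) <= 4 * (Lam + 1) ^ 2 / beta).
  { replace (4 * (Lam + 1) ^ 2 / beta) with (2 * (Lam + 1) ^ 2 / (beta / 2)) by (field; lra).
    apply div_le_den; unfold al; lra. }
  assert (tC1 : 8 * (Lam + 2) ^ 2 / (2 + beta - 2 * al) <= 8 * (Lam + 2) ^ 2 / (2 - beta)).
  { apply div_le_den; unfold al; lra. }
  assert (E1 : Rpower (Rabs s) (2 - p) * Rpower (2 * Rabs s) (2 * al - 2 - beta) <= R0).
  { apply Rle_trans with (Rpower (Rabs s) (2 - p) * Rpower (Rabs s) (2 * al - 2 - beta)).
    apply Rmult_le_compat_l; [left; apply rp_pos| apply rp_double; lra].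
    rewrite rp_comb2. unfold R0, p, al. right; f_equal; ring. }
  assert (E2 : Rpower (Rabs s) (2 * al - p) * Rpower (2 * Rabs s) (- beta) <= R0).
  { apply Rle_trans with (Rpower (Rabs s) (2 * al - p) * Rpower (Rabs s) (- beta)).
    apply Rmult_le_compat_l; [left; apply rp_pos| apply rp_double; lra].
    rewrite rp_comb2. unfold R0, p, al. right; f_equal; ring. }
  fold p.
  assert (P1 : 0 <= 8 * (Lam + 2) ^ 2 / (2 + beta - 2 * al)) by (apply Rmult_le_pos; [lra| left; apply Rinv_0_lt_compat; lra]).
  assert (P2 : 0 <= 2 * (Lam + 1) ^ 2 / beta) by (apply Rmult_le_pos; [lra| left; apply Rinv_0_lt_compat; lra]).
  assert (P3 : 0 <= 8 * (Lam + 2) ^ 2 / (2 + beta - 2 * q)) by (apply Rmult_le_pos; [lra| left; apply Rinv_0_lt_compat; lra]).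
  assert (P4 : 0 <= 8 * (Lam + 2) ^ 2 / (2 - beta)) by (apply Rmult_le_pos; [lra| left; apply Rinv_0_lt_compat; lra]).
  assert (C1 : 8 * (Lam + 2) ^ 2 / (2 + beta - 2 * al) * Rpower (Rabs s) (2 - p) * Rpower (2 * Rabs s) (2 * al - 2 - beta)
     <= 8 * (Lam + 2) ^ 2 / (2 - beta) * R0).
  { rewrite Rmult_assoc. apply Rle_trans with (8 * (Lam + 2) ^ 2 / (2 + beta - 2 * al) * R0).
    apply Rmult_le_compat_l; auto. apply Rmult_le_compat_r; lra. }
  assert (C2 : 2 * (Lam + 1) ^ 2 / beta * Rpower (Rabs s) (2 * al - p) * Rpower (2 * Rabs s) (- beta)
     <= 2 * (Lam + 1) ^ 2 / beta * R0).
  { rewrite Rmult_assoc. apply Rmult_le_compat_l; auto. }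
  unfold Kc.
  assert (2924 * (Lam + 1) ^ 2 / beta = 4 * (Lam + 1) ^ 2 / beta + 2916 * (Lam + 1) ^ 2 / beta + 2 * (Lam + 1) ^ 2 / beta + 2 * (Lam + 1) ^ 2 / beta) by (field; lra).
  assert (16 * (Lam + 2) ^ 2 / (2 - beta) = 8 * (Lam + 2) ^ 2 / (2 - beta) + 8 * (Lam + 2) ^ 2 / (2 - beta)) by (field; lra).
  assert (0 <= 2 * (Lam + 1) ^ 2 / beta * R0) by nra.
  assert (0 <= 8 * (Lam + 2) ^ 2 / (2 + beta - 2 * q) * R0) by nra.
  nra.
Qed.


Lemma inner_small s : s <> 0 -> Rabs s < 1 / 2 ->
  IBi (gs beta u s) 0 (Kc * (Rpower (Rabs s) (2 * q - 1 - 2 * beta) + Rpower (Rabs s) (1 - beta))).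
Proof.
  intros Hs Hr2. pose proof H as H'; destruct H' as [Hb HL Hd Hbd He He3 _ _ _ _ _ _].
  assert (Hr : 0 < Rabs s) by (apply Rabs_pos_lt; auto).
  set (al := beta - eps).
  assert (Hal : beta - eps <= al <= beta + delta) by (unfold al; lra).
  assert (Hal2 : al <= 2) by (unfold al; lra).
  assert (Hal3 : 2 * al < 2 + beta) by (unfold al; lra).
  assert (Hq : beta - eps <= q <= beta + delta) by lra.
  set (R1 := Rpower (Rabs s) (2 * q - 1 - 2 * beta)).
  set (R2 := Rpower (Rabs s) (1 - beta)).
  assert (HR1 : 0 < R1) by apply rp_pos. assert (HR2 : 0 < R2) by apply rp_pos.
  assert (L1 : 0 <= (Lam + 1) ^ 2) by apply pow2_ge_0.
  assert (L2 : 0 <= (Lam + 2) ^ 2) by apply pow2_ge_0.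
  eapply IBi_M; [| eapply (IBi_split _ (gs_pcont _ _ _ _ _ _ H s)) with (y := Rabs s / 2); [lra| lra| apply (IB_A _ _ _ _ _ _ H s q); auto; lra|]].
  2:{ eapply (IBi_split _ (gs_pcont _ _ _ _ _ _ H s)) with (y := 2 * Rabs s); [lra| lra| apply (IB_B _ _ _ _ _ _ H s q); auto; lra|].
      eapply (IBi_split _ (gs_pcont _ _ _ _ _ _ H s)) with (y := 1); [lra| lra| |].
      - apply IB_of_IBi. apply (IBi_C _ _ _ _ _ _ H s q q); auto; lra.
      - apply (IBi_C _ _ _ _ _ _ H s q al); auto; lra. }
  fold R1. fold p.
  rewrite !rp_one, !Rmult_1_r.
  assert (tA : 2 * (Lam + 1) ^ 2 / (2 * q - beta) <= 2 * (Lam + 1) ^ 2 / beta).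
  { apply div_le_den; lra. }
  assert (tC1 : 8 * (Lam + 2) ^ 2 / (2 + beta - 2 * al) <= 8 * (Lam + 2) ^ 2 / (2 - beta)).
  { apply div_le_den; unfold al; lra. }
  assert (E1 : Rpower (Rabs s) (2 - p) * Rpower (2 * Rabs s) (2 * q - 2 - beta) <= R1).
  { apply Rle_trans with (Rpower (Rabs s) (2 - p) * Rpower (Rabs s) (2 * q - 2 - beta)).
    apply Rmult_le_compat_l; [left; apply rp_pos| apply rp_double; lra].
    rewrite rp_comb2. unfold R1, p. right; f_equal; ring. }
  assert (E2 : Rpower (Rabs s) (2 * q - p) * Rpower (2 * Rabs s) (- beta) <= R1).
  { apply Rle_trans with (Rpower (Rabs s) (2 * q - p) * Rpower (Rabs s) (- beta)).
    apply Rmult_le_compat_l; [left; apply rp_pos| apply rp_double; lra].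
    rewrite rp_comb2. unfold R1, p. right; f_equal; ring. }
  assert (E3 : Rpower (Rabs s) (2 * q - p) <= R1).
  { unfold R1, p. apply rp_anti_exp; lra. }
  assert (E4 : Rpower (Rabs s) (2 - p) = R2) by (unfold R2, p; f_equal; ring).
  rewrite E4.
  assert (P1 : 0 <= 8 * (Lam + 2) ^ 2 / (2 + beta - 2 * al)) by (apply Rmult_le_pos; [lra| left; apply Rinv_0_lt_compat; lra]).
  assert (P2 : 0 <= 2 * (Lam + 1) ^ 2 / beta) by (apply Rmult_le_pos; [lra| left; apply Rinv_0_lt_compat; lra]).
  assert (P3 : 0 <= 8 * (Lam + 2) ^ 2 / (2 + beta - 2 * q)) by (apply Rmult_le_pos; [lra| left; apply Rinv_0_lt_compat; lra]).
  assert (P4 : 0 <= 8 * (Lam + 2) ^ 2 / (2 - beta)) by (apply Rmult_le_pos; [lra| left; apply Rinv_0_lt_compat; lra]).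
  assert (P5 : 0 <= 2 * (Lam + 1) ^ 2 / (2 * q - beta)) by (apply Rmult_le_pos; [lra| left; apply Rinv_0_lt_compat; lra]).
  assert (C1 : 8 * (Lam + 2) ^ 2 / (2 + beta - 2 * q) * Rpower (Rabs s) (2 - p) * Rpower (2 * Rabs s) (2 * q - 2 - beta)
     <= 8 * (Lam + 2) ^ 2 / (2 + beta - 2 * q) * R1).
  { rewrite Rmult_assoc. apply Rmult_le_compat_l; auto. }
  rewrite E4 in C1.
  assert (C2 : 2 * (Lam + 1) ^ 2 / beta * Rpower (Rabs s) (2 * q - p) * Rpower (2 * Rabs s) (- beta)
     <= 2 * (Lam + 1) ^ 2 / beta * R1).
  { rewrite Rmult_assoc. apply Rmult_le_compat_l; auto. }
  assert (C3 : 2 * (Lam + 1) ^ 2 / beta * Rpower (Rabs s) (2 * q - p) <= 2 * (Lam + 1) ^ 2 / beta * R1).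
  { apply Rmult_le_compat_l; auto. }
  assert (C4 : 8 * (Lam + 2) ^ 2 / (2 + beta - 2 * al) * R2 <= 8 * (Lam + 2) ^ 2 / (2 - beta) * R2).
  { apply Rmult_le_compat_r; lra. }
  unfold Kc.
  assert (2924 * (Lam + 1) ^ 2 / beta = 2 * (Lam + 1) ^ 2 / beta + 2916 * (Lam + 1) ^ 2 / beta + 2 * (Lam + 1) ^ 2 / beta + 2 * (Lam + 1) ^ 2 / beta + 2 * (Lam + 1) ^ 2 / beta) by (field; lra).
  assert (16 * (Lam + 2) ^ 2 / (2 - beta) = 8 * (Lam + 2) ^ 2 / (2 - beta) + 8 * (Lam + 2) ^ 2 / (2 - beta)) by (field; lra).
  assert (2 * (Lam + 1) ^ 2 / (2 * q - beta) * R1 <= 2 * (Lam + 1) ^ 2 / beta * R1) by (apply Rmult_le_compat_r; lra).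
  nra.
Qed.
End IN.

Lemma c2d_1 g x y : continuity_pt g x -> continuity_2d_pt (fun a b => g a) x y.
Proof.
  intros Hg eps. destruct (cont_eps g x Hg eps (cond_pos eps)) as (d & Hd & K).
  exists (mkposreal d Hd). intros a b Ha Hb. apply K; auto.
Qed.

Lemma c2d_2 g x y : continuity_pt g y -> continuity_2d_pt (fun a b => g b) x y.
Proof.
  intros Hg eps. destruct (cont_eps g y Hg eps (cond_pos eps)) as (d & Hd & K).
  exists (mkposreal d Hd). intros a b Ha Hb. apply K; auto.
Qed.

Lemma c2d_sum g x y : continuity_pt g (x + y) -> continuity_2d_pt (fun a b => g (a + b)) x y.
Proof.
  intros Hg eps. destruct (cont_eps g (x + y) Hg eps (cond_pos eps)) as (d & Hd & K).
  assert (Hd2 : 0 < d / 2) by lra.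
  exists (mkposreal _ Hd2). intros a b Ha Hb. simpl in *. apply K.
  replace (a + b - (x + y)) with ((a - x) + (b - y)) by ring.
  apply Rle_lt_trans with (Rabs (a - x) + Rabs (b - y)). apply Rabs_triang. lra.
Qed.

Section CT.
Variables (beta Lam delta eps : R) (u u' : R -> R).
Hypothesis H : UH beta Lam delta eps u u'.

Lemma gs_c2d h s0 : 0 < h -> s0 <> 0 -> continuity_2d_pt (fun h s => gs beta u s h) h s0.
Proof.
  intros Hh Hs0.
  assert (Hc : forall y, continuity_pt u y) by (intros; apply (W_contpt _ _ _ _ _ _ H)).
  apply continuity_2d_pt_ext with (fun a b => ((u (a + b) - u a - u b) * (u (a + b) - u a - u b))
     * Rpower a (- (1 + beta)) * Rpower (Rabs b) (- (1 + beta))).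
  { intros; unfold gs, Dd; ring. }
  assert (HD : continuity_2d_pt (fun a b => u (a + b) - u a - u b) h s0).
  { apply continuity_2d_pt_minus; [apply continuity_2d_pt_minus|].
    - apply c2d_sum; auto.
    - apply c2d_1; auto.
    - apply c2d_2; auto. }
  apply continuity_2d_pt_mult; [apply continuity_2d_pt_mult|].
  - apply continuity_2d_pt_mult; auto.
  - apply c2d_1. apply rp_contpt; auto.
  - apply (c2d_2 (fun b => Rpower (Rabs b) (- (1 + beta)))).
    apply (continuity_pt_comp Rabs (fun z => Rpower z (- (1 + beta)))).
    apply Rcontinuity_abs. apply rp_contpt. apply Rabs_pos_lt; auto.
Qed.

Lemma param_cont s0 a b : s0 <> 0 -> 0 < a -> a <= b -> forall e, 0 < e ->
  exists d, 0 < d /\ forall s, Rabs (s - s0) < d ->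
    Rabs (RInt (gs beta u s) a b - RInt (gs beta u s0) a b) <= e.
Proof.
  intros Hs0 Ha Hab e He.
  assert (He' : 0 < e / (b - a + 1)) by (apply Rdiv_lt_0_compat; lra).
  destruct (uniform_continuity_2d_1d (fun h s => gs beta u s h) a b s0) with (mkposreal _ He') as [d K].
  { intros x Hx. apply gs_c2d; lra. }
  assert (Hd : 0 < Rmin d (Rabs s0 / 2)) by (apply Rmin_glb_lt; [apply cond_pos| assert (0 < Rabs s0) by (apply Rabs_pos_lt; auto); lra]).
  exists (Rmin d (Rabs s0 / 2)). split; auto. intros s Hs.
  assert (Hsd : Rabs (s - s0) < d) by (apply Rlt_le_trans with (Rmin d (Rabs s0 / 2)); auto; apply Rmin_l).
  assert (Hss : Rabs (s - s0) < Rabs s0 / 2) by (apply Rlt_le_trans with (Rmin d (Rabs s0 / 2)); auto; apply Rmin_r).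
  assert (Hsn : s <> 0).
  { intros ->. rewrite Rminus_0_l, Rabs_Ropp in Hss. assert (0 < Rabs s0) by (apply Rabs_pos_lt; auto). lra. }
  assert (E1 : ex_RInt (gs beta u s) a b) by (apply exR; auto; apply (gs_pcont _ _ _ _ _ _ H)).
  assert (E2 : ex_RInt (gs beta u s0) a b) by (apply exR; auto; apply (gs_pcont _ _ _ _ _ _ H)).
  assert (Hm := RInt_minus (gs beta u s) (gs beta u s0) a b E1 E2).
  change (RInt (fun x => gs beta u s x - gs beta u s0 x) a b = RInt (gs beta u s) a b - RInt (gs beta u s0) a b) in Hm.
  rewrite <- Hm.
  apply Rle_trans with ((b - a) * (e / (b - a + 1))).
  - apply abs_RInt_le_const; auto.
    + apply (ex_RInt_minus (V:=R_NormedModule)); auto.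
    + intros t Ht. left. apply Rabs_def2 in Hsd.
      apply (K t s0 t s); try lra. rewrite Rminus_diag, Rabs_R0. apply cond_pos.
  - apply Rle_trans with ((b - a + 1) * (e / (b - a + 1))).
    apply Rmult_le_compat_r; lra. right; field; lra.
Qed.
End CT.

Lemma rp_range r a b k : 0 < a -> a <= r <= b -> Rpower r k <= Rpower a k + Rpower b k.
Proof.
  intros Ha Hr. assert (0 < Rpower a k) by apply rp_pos. assert (0 < Rpower b k) by apply rp_pos.
  destruct (Rle_dec 0 k).
  - assert (Rpower r k <= Rpower b k) by (apply rp_mono_base; lra). lra.
  - assert (Rpower r k <= Rpower a k) by (apply rp_anti_base; lra). lra.
Qed.

Lemma small_pow c k t y0 : 0 <= c -> 0 < k -> 0 < t -> 0 < y0 ->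
  exists y, 0 < y <= y0 /\ forall z, 0 < z <= y -> c * Rpower z k <= t.
Proof.
  intros Hc Hk Ht Hy0. set (t' := t / (c + 1)).
  assert (Ht' : 0 < t') by (unfold t'; apply Rdiv_lt_0_compat; lra).
  exists (Rmin y0 (Rpower t' (/ k))). split.
  - split; [apply Rmin_glb_lt; auto; apply rp_pos| apply Rmin_l].
  - intros z Hz. assert (Hz2 : z <= Rpower t' (/ k)) by (apply Rle_trans with (Rmin y0 (Rpower t' (/ k))); [lra| apply Rmin_r]).
    assert (Rpower z k <= t').
    { apply Rle_trans with (Rpower (Rpower t' (/ k)) k). apply rp_mono_base; lra.
      rewrite rp_pow_rp by auto. replace (/ k * k) with 1 by (field; lra). rewrite rp_1; lra. }
    assert (c * Rpower z k <= c * t') by (apply Rmult_le_compat_l; auto).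
    assert (c * t' <= t) by (apply Rle_trans with ((c + 1) * t'); [apply Rmult_le_compat_r; lra| unfold t'; right; field; lra]).
    lra.
Qed.

Lemma large_pow c k t N0 : 0 <= c -> 0 < k -> 0 < t ->
  exists N, N0 <= N /\ 0 < N /\ forall z, N <= z -> c * Rpower z (- k) <= t.
Proof.
  intros Hc Hk Ht. set (t' := t / (c + 1)).
  assert (Ht' : 0 < t') by (unfold t'; apply Rdiv_lt_0_compat; lra).
  set (N := Rmax (Rmax N0 1) (Rpower t' (- / k))).
  assert (HN1 : Rmax N0 1 <= N) by apply Rmax_l.
  assert (HN2 : Rpower t' (- / k) <= N) by apply Rmax_r.
  assert (N0 <= Rmax N0 1) by apply Rmax_l. assert (1 <= Rmax N0 1) by apply Rmax_r.
  exists N. split; [lra| split; [lra|]].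
  intros z Hz.
  assert (Rpower z (- k) <= t').
  { apply Rle_trans with (Rpower (Rpower t' (- / k)) (- k)). apply rp_anti_base; [apply rp_pos| lra| lra].
    rewrite rp_pow_rp by auto. replace (- / k * - k) with 1 by (field; lra). rewrite rp_1; lra. }
  assert (c * Rpower z (- k) <= c * t') by (apply Rmult_le_compat_l; auto).
  assert (c * t' <= t) by (apply Rle_trans with ((c + 1) * t'); [apply Rmult_le_compat_r; lra| unfold t'; right; field; lra]).
  lra.
Qed.

Section CT2.
Variables (beta Lam delta eps : R) (u u' : R -> R).
Hypothesis H : UH beta Lam delta eps u u'.
Let p := 1 + beta.
Let al := beta - eps.

Lemma IB_A_gen s y : s <> 0 -> 0 < y -> y <= Rabs s / 2 ->
  IB (gs beta u s) 0 y
    (8 * (Lam + 2) ^ 2 * Rpower (Rabs s) (2 * al - 2) * Rpower (Rabs s) (- p) * Rpower y (2 - p + 1) / (2 - p + 1)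
     + 2 * (Lam + 1) ^ 2 * Rpower (Rabs s) (- p) * Rpower y (2 * al - p + 1) / (2 * al - p + 1)).
Proof.
  intros Hs Hy Hys. pose proof H as H'; destruct H' as [Hb HL Hd Hbd He He3 _ _ _ _ _ _].
  set (r := Rabs s) in *. assert (Hr : 0 < r) by (apply Rabs_pos_lt; auto).
  set (c1 := 8 * (Lam + 2) ^ 2 * Rpower r (2 * al - 2) * Rpower r (- p)).
  set (c2 := 2 * (Lam + 1) ^ 2 * Rpower r (- p)).
  assert (Hc1 : 0 <= c1) by (unfold c1; assert (0 < Rpower r (2 * al - 2)) by apply rp_pos;
    assert (0 < Rpower r (- p)) by apply rp_pos; assert (0 <= (Lam + 2) ^ 2) by apply pow2_ge_0;
    apply Rmult_le_pos; [apply Rmult_le_pos|]; lra).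
  assert (Hc2 : 0 <= c2) by (unfold c2; assert (0 < Rpower r (- p)) by apply rp_pos;
    assert (0 <= (Lam + 1) ^ 2) by apply pow2_ge_0; apply Rmult_le_pos; lra).
  apply IB_le with (fun h => c1 * Rpower h (2 - p) + c2 * Rpower h (2 * al - p)).
  - apply (gs_pcont _ _ _ _ _ _ H).
  - apply pcont_plus; apply pcont_scal, pcont_rp.
  - intros h Hh Hh2. eapply Rle_trans; [apply gs_le; [lra| apply (PA _ _ _ _ _ _ H al); unfold al; auto; try lra; fold r; lra]|].
    fold r. unfold c1, c2.
    rewrite (rp_sq_eq h) by lra.
    assert (E1 : Rpower h 2 * Rpower h (- p) = Rpower h (2 - p)) by (rewrite rp_comb2; f_equal; ring).
    assert (E2 : Rpower h (2 * al) * Rpower h (- p) = Rpower h (2 * al - p)) by (rewrite rp_comb2; f_equal; ring).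
    rewrite <- E1, <- E2. unfold p. right; ring.
  - apply IB_plus; try (apply pcont_scal, pcont_rp).
    + apply IB_pow0; auto; unfold p; lra.
    + apply IB_pow0; auto; unfold p, al; lra.
Qed.

Lemma IB_mid f a b : pcont f -> pnn f -> 0 < a -> a <= b -> IB f a b (RInt f a b).
Proof. intros Hc Hn Ha Hab x y Hx Hax Hxy Hyb. apply RInt_mono_int; auto; lra. Qed.

Let Fp s := ipos (gs beta u s).

Lemma Fp_cont s0 : s0 <> 0 -> continuity_pt Fp s0.
Proof.
  intros Hs0. pose proof H as H'; destruct H' as [Hb HL Hd Hbd He He3 _ _ _ _ _ _].
  set (r0 := Rabs s0). assert (Hr0 : 0 < r0) by (apply Rabs_pos_lt; auto).
  set (Q := fun k => Rpower (r0 / 2) k + Rpower (2 * r0) k).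
  assert (HQ : forall k, 0 < Q k) by (intros; unfold Q; assert (0 < Rpower (r0 / 2) k) by apply rp_pos;
     assert (0 < Rpower (2 * r0) k) by apply rp_pos; lra).
  assert (HQr : forall s k, Rabs (s - s0) < r0 / 2 -> Rpower (Rabs s) k <= Q k).
  { intros s k Hs. apply rp_range; [lra|]. apply Rabs_def2 in Hs. unfold r0 in *.
    destruct (Rle_dec 0 s0).
    - rewrite (Rabs_right s0) in * by lra. rewrite Rabs_right by lra. lra.
    - rewrite (Rabs_left s0) in * by lra. rewrite Rabs_left by lra. lra. }
  assert (Hrs : forall s, Rabs (s - s0) < r0 / 2 -> s <> 0 /\ r0 / 2 <= Rabs s <= 2 * r0).
  { intros s Hs. apply Rabs_def2 in Hs. unfold r0 in *.
    destruct (Rle_dec 0 s0).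
    - rewrite (Rabs_right s0) in * by lra. rewrite Rabs_right by lra. split; lra.
    - rewrite (Rabs_left s0) in * by lra. rewrite Rabs_left by lra. split; lra. }
  assert (L1 : 0 <= (Lam + 1) ^ 2) by apply pow2_ge_0.
  assert (L2 : 0 <= (Lam + 2) ^ 2) by apply pow2_ge_0.
  intros e0 He0. simpl. unfold R_dist.
  set (t := e0 / 8). assert (Ht : 0 < t) by (unfold t; lra).
  (* tail near 0 *)
  set (A1 := 8 * (Lam + 2) ^ 2 * Q (2 * al - 2) * Q (- p) / (2 - p + 1)).
  set (A2 := 2 * (Lam + 1) ^ 2 * Q (- p) / (2 * al - p + 1)).
  assert (HA1 : 0 <= A1).
  { assert (0 < Q (2 * al - 2)) by auto; assert (0 < Q (- p)) by auto.
    assert (0 < / (2 - p + 1)) by (apply Rinv_0_lt_compat; unfold p; lra).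
    unfold A1, Rdiv; repeat apply Rmult_le_pos; lra. }
  assert (HA2 : 0 <= A2).
  { assert (0 < Q (- p)) by auto.
    assert (0 < / (2 * al - p + 1)) by (apply Rinv_0_lt_compat; unfold p, al; lra).
    unfold A2, Rdiv; repeat apply Rmult_le_pos; lra. }
  destruct (small_pow A1 (2 - p + 1) (t / 2) (r0 / 4)) as (y1 & Hy1 & Ky1); auto; try (unfold p; lra); try lra.
  destruct (small_pow A2 (2 * al - p + 1) (t / 2) y1) as (y & Hy & Ky); auto; try (unfold p, al; lra); try lra.
  (* tail near oo *)
  set (B1 := 8 * (Lam + 2) ^ 2 / (2 + beta - 2 * al) * Q (2 - p)).
  set (B2 := 2 * (Lam + 1) ^ 2 / beta * Q (2 * al - p)).
  assert (HB1 : 0 <= B1).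
  { assert (0 < Q (2 - p)) by auto.
    assert (0 < / (2 + beta - 2 * al)) by (apply Rinv_0_lt_compat; unfold al; lra).
    unfold B1, Rdiv; repeat apply Rmult_le_pos; lra. }
  assert (HB2 : 0 <= B2).
  { assert (0 < Q (2 * al - p)) by auto.
    assert (0 < / beta) by (apply Rinv_0_lt_compat; lra).
    unfold B2, Rdiv; repeat apply Rmult_le_pos; lra. }
  destruct (large_pow B1 (2 + beta - 2 * al) (t / 2) (4 * r0 + y)) as (N1 & HN1 & HN1p & KN1); auto; try (unfold al; lra); try lra.
  destruct (large_pow B2 beta (t / 2) N1) as (N & HN & HNp & KN); auto; try lra.
  assert (Key : forall s, Rabs (s - s0) < r0 / 2 ->
     RInt (gs beta u s) y N <= Fp s <= t + RInt (gs beta u s) y N + t).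
  { intros s Hs. destruct (Hrs s Hs) as [Hsn Hsr].
    assert (Hpc := gs_pcont _ _ _ _ _ _ H s). assert (Hpn := gs_pnn beta u s).
    assert (HI : IBi (gs beta u s) 0 (t + (RInt (gs beta u s) y N + t))).
    { apply IBi_split with y; auto; try lra.
      - apply IB_M with (8 * (Lam + 2) ^ 2 * Rpower (Rabs s) (2 * al - 2) * Rpower (Rabs s) (- p) * Rpower y (2 - p + 1) / (2 - p + 1)
           + 2 * (Lam + 1) ^ 2 * Rpower (Rabs s) (- p) * Rpower y (2 * al - p + 1) / (2 * al - p + 1)).
        2:{ apply IB_A_gen; auto; lra. }
        assert (K1 := Ky1 y ltac:(lra)). assert (K2 := Ky y ltac:(lra)).
        assert (q1 := HQr s (2 * al - 2) Hs). assert (q2 := HQr s (- p) Hs).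
        assert (0 < Rpower (Rabs s) (2 * al - 2)) by apply rp_pos.
        assert (0 < Rpower (Rabs s) (- p)) by apply rp_pos.
        assert (0 < Rpower y (2 - p + 1)) by apply rp_pos.
        assert (0 < Rpower y (2 * al - p + 1)) by apply rp_pos.
        assert (i1 : 0 < / (2 - p + 1)) by (apply Rinv_0_lt_compat; unfold p; lra).
        assert (i2 : 0 < / (2 * al - p + 1)) by (apply Rinv_0_lt_compat; unfold p, al; lra).
        assert (S1 : Rpower (Rabs s) (2 * al - 2) * Rpower (Rabs s) (- p) <= Q (2 * al - 2) * Q (- p))
          by (apply Rmult_le_compat; lra).
        assert (T1 : 8 * (Lam + 2) ^ 2 * Rpower (Rabs s) (2 * al - 2) * Rpower (Rabs s) (- p) * Rpower y (2 - p + 1) / (2 - p + 1)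
                    <= A1 * Rpower y (2 - p + 1)).
        { unfold A1, Rdiv.
          replace (8 * (Lam + 2) ^ 2 * Rpower (Rabs s) (2 * al - 2) * Rpower (Rabs s) (- p) * Rpower y (2 - p + 1) * / (2 - p + 1))
            with ((8 * (Lam + 2) ^ 2 * / (2 - p + 1) * Rpower y (2 - p + 1)) * (Rpower (Rabs s) (2 * al - 2) * Rpower (Rabs s) (- p))) by ring.
          replace (8 * (Lam + 2) ^ 2 * Q (2 * al - 2) * Q (- p) * / (2 - p + 1) * Rpower y (2 - p + 1))
            with ((8 * (Lam + 2) ^ 2 * / (2 - p + 1) * Rpower y (2 - p + 1)) * (Q (2 * al - 2) * Q (- p))) by ring.
          apply Rmult_le_compat_l; auto. apply Rmult_le_pos; [apply Rmult_le_pos|]; lra. }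
        assert (T2 : 2 * (Lam + 1) ^ 2 * Rpower (Rabs s) (- p) * Rpower y (2 * al - p + 1) / (2 * al - p + 1)
                    <= A2 * Rpower y (2 * al - p + 1)).
        { unfold A2, Rdiv.
          replace (2 * (Lam + 1) ^ 2 * Rpower (Rabs s) (- p) * Rpower y (2 * al - p + 1) * / (2 * al - p + 1))
            with ((2 * (Lam + 1) ^ 2 * / (2 * al - p + 1) * Rpower y (2 * al - p + 1)) * Rpower (Rabs s) (- p)) by ring.
          replace (2 * (Lam + 1) ^ 2 * Q (- p) * / (2 * al - p + 1) * Rpower y (2 * al - p + 1))
            with ((2 * (Lam + 1) ^ 2 * / (2 * al - p + 1) * Rpower y (2 * al - p + 1)) * Q (- p)) by ring.
          apply Rmult_le_compat_l; auto. apply Rmult_le_pos; [apply Rmult_le_pos|]; lra. }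
        lra.
      - apply IBi_split with N; auto; try lra.
        + apply IB_mid; auto; lra.
        + apply IBi_M with (8 * (Lam + 2) ^ 2 / (2 + beta - 2 * al) * Rpower (Rabs s) (2 - p) * Rpower N (2 * al - 2 - beta)
             + 2 * (Lam + 1) ^ 2 / beta * Rpower (Rabs s) (2 * al - p) * Rpower N (- beta)).
          2:{ apply (IBi_C _ _ _ _ _ _ H s al al N); auto; unfold al; try lra. }
          assert (K1 := KN1 N ltac:(lra)). assert (K2 := KN N ltac:(lra)).
          replace (- (2 + beta - 2 * al)) with (2 * al - 2 - beta) in K1 by ring.
          assert (q1 := HQr s (2 - p) Hs). assert (q2 := HQr s (2 * al - p) Hs).
          assert (0 < Rpower N (2 * al - 2 - beta)) by apply rp_pos.
          assert (0 < Rpower N (- beta)) by apply rp_pos.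
          assert (i1 : 0 < / (2 + beta - 2 * al)) by (apply Rinv_0_lt_compat; unfold al; lra).
          assert (i2 : 0 < / beta) by (apply Rinv_0_lt_compat; lra).
          assert (T1 : 8 * (Lam + 2) ^ 2 / (2 + beta - 2 * al) * Rpower (Rabs s) (2 - p) * Rpower N (2 * al - 2 - beta)
                        <= B1 * Rpower N (2 * al - 2 - beta)).
          { unfold B1. apply Rmult_le_compat_r; [lra|]. apply Rmult_le_compat_l; auto. unfold Rdiv; nra. }
          assert (T2 : 2 * (Lam + 1) ^ 2 / beta * Rpower (Rabs s) (2 * al - p) * Rpower N (- beta)
                        <= B2 * Rpower N (- beta)).
          { unfold B2. apply Rmult_le_compat_r; [lra|]. apply Rmult_le_compat_l; auto. unfold Rdiv; nra. }
          lra. }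
    destruct (ipos_spec _ _ Hpc Hpn HI) as (_ & U1 & U2).
    unfold Fp; split; [apply U2; lra| lra]. }
  destruct (param_cont _ _ _ _ _ _ H s0 y N Hs0) with (e := t) as (d & Hd' & Kd); try lra.
  exists (Rmin d (r0 / 2)). split. { apply Rmin_glb_lt; lra. }
  intros s [_ Hs]. unfold R_dist in Hs.
  assert (Hs1 : Rabs (s - s0) < d) by (apply Rlt_le_trans with (Rmin d (r0 / 2)); auto; apply Rmin_l).
  assert (Hs2 : Rabs (s - s0) < r0 / 2) by (apply Rlt_le_trans with (Rmin d (r0 / 2)); auto; apply Rmin_r).
  assert (Z : Rabs (s0 - s0) < r0 / 2) by (rewrite Rminus_diag, Rabs_R0; lra).
  destruct (Key s Hs2) as [K1 K2]. destruct (Key s0 Z) as [K3 K4].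
  specialize (Kd s Hs1).
  assert (A := Rle_abs (RInt (gs beta u s) y N - RInt (gs beta u s0) y N)).
  assert (B := Rle_abs (- (RInt (gs beta u s) y N - RInt (gs beta u s0) y N))). rewrite Rabs_Ropp in B.
  apply Rabs_def1; unfold t in *; lra.
Qed.
End CT2.

Lemma pow_nonadd x y a : 0 < x -> 0 < y -> 0 < a -> a <> 1 ->
  Rpower (x + y) a <> Rpower x a + Rpower y a.
Proof.
  intros Hx Hy Ha Ha1 E.
  set (t := x / (x + y)).
  assert (Ht : 0 < t < 1) by (unfold t; split; [apply Rdiv_lt_0_compat; lra| apply (Rmult_lt_reg_r (x + y)); [lra|]; field_simplify; lra]).
  assert (Ex : x = (x + y) * t) by (unfold t; field; lra).
  assert (Ey : y = (x + y) * (1 - t)) by (unfold t; field; lra).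
  rewrite Ex in E at 2. rewrite Ey in E at 3.
  rewrite !rp_mult_base in E by lra.
  assert (P : 0 < Rpower (x + y) a) by apply rp_pos.
  assert (E2 : Rpower t a + Rpower (1 - t) a = 1).
  { apply (Rmult_eq_reg_l (Rpower (x + y) a)); [| lra]. rewrite Rmult_1_r. lra. }
  destruct (Rlt_dec a 1).
  - assert (Rpower t 1 < Rpower t a) by (apply rp_strict_exp_lt1; lra).
    assert (Rpower (1 - t) 1 < Rpower (1 - t) a) by (apply rp_strict_exp_lt1; lra).
    rewrite !rp_1 in * by lra. lra.
  - assert (Rpower t a < Rpower t 1) by (apply rp_strict_exp_lt1; lra).
    assert (Rpower (1 - t) a < Rpower (1 - t) 1) by (apply rp_strict_exp_lt1; lra).
    rewrite !rp_1 in * by lra. lra.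
Qed.

Section G.
Variables (beta Lam delta eps : R) (u u' : R -> R).
Hypothesis H : UH beta Lam delta eps u u'.
Hypothesis Heps4 : eps <= beta / 4.
Hypothesis Heps2 : 2 * eps <= 1.
Hypothesis Hal1 : beta - eps <> 1.
Variable q : R.
Hypothesis Hq1 : beta < q <= beta + delta.
Hypothesis Hq2 : 2 * q < 2 + beta.

Let Fp s := ipos (gs beta u s).
Let K := Kc beta Lam q.

Lemma K_pos : 0 < K.
Proof.
  pose proof H as H'; destruct H' as [Hb HL Hd Hbd He He3 _ _ _ _ _ _].
  unfold K, Kc.
  assert (0 < 16 * (Lam + 2) ^ 2 / (2 - beta)) by (apply Rdiv_lt_0_compat; [apply Rmult_lt_0_compat; [lra| apply pow_lt; lra]| lra]).
  assert (0 < 2924 * (Lam + 1) ^ 2 / beta) by (apply Rdiv_lt_0_compat; [apply Rmult_lt_0_compat; [lra| apply pow_lt; lra]| lra]).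
  assert (0 < 8 * (Lam + 2) ^ 2 / (2 + beta - 2 * q)) by (apply Rdiv_lt_0_compat; [apply Rmult_lt_0_compat; [lra| apply pow_lt; lra]| lra]).
  lra.
Qed.

Lemma Fp_spec s : s <> 0 ->
  ImpIntPos (gs beta u s) (Fp s) /\
  (1 / 2 <= Rabs s -> Fp s <= K * Rpower (Rabs s) (- 1 - 2 * eps)) /\
  (Rabs s < 1 / 2 -> Fp s <= K * (Rpower (Rabs s) (2 * q - 1 - 2 * beta) + Rpower (Rabs s) (1 - beta))) /\
  (forall a b, 0 < a -> a <= b -> RInt (gs beta u s) a b <= Fp s).
Proof.
  intros Hs. assert (Hpc := gs_pcont _ _ _ _ _ _ H s). assert (Hpn := gs_pnn beta u s).
  destruct (Rle_dec (1 / 2) (Rabs s)).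
  - destruct (ipos_spec _ _ Hpc Hpn (inner_big _ _ _ _ _ _ H Heps4 q Hq1 Hq2 s Hs r)) as (A & B & C).
    unfold Fp, K. repeat split; auto. intros; lra.
  - assert (Hr : Rabs s < 1 / 2) by lra.
    destruct (ipos_spec _ _ Hpc Hpn (inner_small _ _ _ _ _ _ H q Hq1 Hq2 s Hs Hr)) as (A & B & C).
    unfold Fp, K. repeat split; auto. intros; lra.
Qed.

Lemma Fp_nn s : s <> 0 -> 0 <= Fp s.
Proof.
  intros Hs. destruct (Fp_spec s Hs) as (_ & _ & _ & C).
  apply Rle_trans with (RInt (gs beta u s) 1 1); [rewrite RInt_point'; lra| apply C; lra].
Qed.

Let F s := Fp s + Fp (- s).

Lemma F_pcont : pcont F.
Proof.
  apply pcont_of. intros x Hx. unfold F. apply continuity_pt_plus.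
  - apply (Fp_cont _ _ _ _ _ _ H). lra.
  - apply (continuity_pt_comp Ropp (fun s => ipos (gs beta u s))).
    apply continuity_pt_opp, continuity_pt_id.
    apply (Fp_cont _ _ _ _ _ _ H). lra.
Qed.

Lemma F_pnn : pnn F.
Proof. intros x Hx. unfold F. assert (0 <= Fp x) by (apply Fp_nn; lra). assert (0 <= Fp (- x)) by (apply Fp_nn; lra). lra. Qed.

Lemma F_IBi : IBi F 0 (2 * K / (2 * q - 2 * beta) + 2 * K / (2 - beta) + 2 * K / eps).
Proof.
  pose proof H as H'; destruct H' as [Hb HL Hd Hbd He He3 _ _ _ _ _ _].
  assert (HK := K_pos).
  replace (2 * K / (2 * q - 2 * beta) + 2 * K / (2 - beta) + 2 * K / eps) with
     ((2 * K / (2 * q - 2 * beta) + 2 * K / (2 - beta)) + 2 * K / eps) by ring.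
  apply IBi_split with (1 / 2); [apply F_pcont| lra| lra| |].
  - apply IB_M with (2 * K * Rpower (1 / 2) (2 * q - 1 - 2 * beta + 1) / (2 * q - 1 - 2 * beta + 1)
                     + 2 * K * Rpower (1 / 2) (1 - beta + 1) / (1 - beta + 1)).
    + replace (2 * q - 1 - 2 * beta + 1) with (2 * q - 2 * beta) by ring.
      replace (1 - beta + 1) with (2 - beta) by ring.
      assert (Rpower (1 / 2) (2 * q - 2 * beta) <= 1) by (left; apply rp_lt1; lra).
      assert (Rpower (1 / 2) (2 - beta) <= 1) by (left; apply rp_lt1; lra).
      unfold Rdiv. apply Rplus_le_compat.
      * rewrite Rmult_assoc. rewrite (Rmult_comm (Rpower _ _)). rewrite <- Rmult_assoc.
        apply Rle_trans with (2 * K * / (2 * q - 2 * beta) * 1); [| lra].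
        apply Rmult_le_compat_l; [| lra]. apply Rmult_le_pos; [lra| left; apply Rinv_0_lt_compat; lra].
      * rewrite Rmult_assoc. rewrite (Rmult_comm (Rpower _ _)). rewrite <- Rmult_assoc.
        apply Rle_trans with (2 * K * / (2 - beta) * 1); [| lra].
        apply Rmult_le_compat_l; [| lra]. apply Rmult_le_pos; [lra| left; apply Rinv_0_lt_compat; lra].
    + apply IB_le with (fun h => 2 * K * Rpower h (2 * q - 1 - 2 * beta) + 2 * K * Rpower h (1 - beta)).
      * apply F_pcont.
      * apply pcont_plus; apply pcont_scal, pcont_rp.
      * intros h Hh Hh2. unfold F.
        destruct (Fp_spec h ltac:(lra)) as (_ & _ & A & _).
        destruct (Fp_spec (- h) ltac:(lra)) as (_ & _ & B & _).
        rewrite Rabs_Ropp in B. rewrite Rabs_right in A, B by lra.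
        specialize (A ltac:(lra)). specialize (B ltac:(lra)). lra.
      * apply IB_plus; try (apply pcont_scal, pcont_rp); apply IB_pow0; lra.
  - apply IBi_M with (2 * K * Rpower (1 / 2) (- 1 - 2 * eps + 1) / (- (- 1 - 2 * eps + 1))).
    + replace (- 1 - 2 * eps + 1) with (- (2 * eps)) by ring. replace (- - (2 * eps)) with (2 * eps) by ring.
      assert (Rpower (1 / 2) (- (2 * eps)) <= 2).
      { rewrite <- rp_inv. replace (1 / 2) with (/ 2) by field. 
        unfold Rpower. rewrite ln_Rinv by lra. rewrite <- exp_Ropp.
        replace (- (2 * eps * - ln 2)) with (2 * eps * ln 2) by ring.
        apply Rle_trans with (exp (1 * ln 2)).
        - apply exp_le'. assert (0 < ln 2) by (apply ln_pos'; lra). nra.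
        - rewrite Rmult_1_l, exp_ln; lra. }
      apply Rle_trans with (2 * K * 2 / (2 * eps)).
      * unfold Rdiv. apply Rmult_le_compat_r; [left; apply Rinv_0_lt_compat; lra|]. apply Rmult_le_compat_l; lra.
      * right; field; lra.
    + apply IBi_le with (fun h => 2 * K * Rpower h (- 1 - 2 * eps)).
      * apply F_pcont.
      * apply pcont_scal, pcont_rp.
      * intros h Hh Hh2. unfold F.
        destruct (Fp_spec h ltac:(lra)) as (_ & A & _ & _).
        destruct (Fp_spec (- h) ltac:(lra)) as (_ & B & _ & _).
        rewrite Rabs_Ropp in B. rewrite Rabs_right in A, B by lra.
        specialize (A ltac:(lra)). specialize (B ltac:(lra)). lra.
      * apply IBi_pow; lra.
Qed.


Lemma D_ne0 s h : 1 < s -> 1 < h -> Dd u s h <> 0.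
Proof.
  intros Hs Hh. pose proof H as H'; destruct H' as [Hb HL Hd Hbd He He3 _ _ _ _ _ _].
  unfold Dd. rewrite !(W_out _ _ _ _ _ _ H) by (rewrite Rabs_right; lra).
  rewrite !Rabs_right by lra.
  assert (N := pow_nonadd h s (beta - eps) ltac:(lra) ltac:(lra) ltac:(lra) Hal1). lra.
Qed.

Lemma gs_pos s h : 1 < s -> 1 < h -> 0 < gs beta u s h.
Proof.
  intros Hs Hh. unfold gs.
  assert (0 < Dd u s h ^ 2) by (apply pow2_gt_0; apply D_ne0; auto).
  assert (0 < Rpower h (- (1 + beta))) by apply rp_pos.
  assert (0 < Rpower (Rabs s) (- (1 + beta))) by apply rp_pos.
  apply Rmult_lt_0_compat; [apply Rmult_lt_0_compat|]; auto.
Qed.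

Lemma F_pos s : 1 < s -> 0 < F s.
Proof.
  intros Hs. unfold F.
  destruct (Fp_spec s ltac:(lra)) as (_ & _ & _ & C).
  assert (0 <= Fp (- s)) by (apply Fp_nn; lra).
  assert (0 < RInt (gs beta u s) 1 2).
  { apply RInt_gt_0; [lra| intros; apply gs_pos; lra| intros; apply (gs_pcont _ _ _ _ _ _ H); lra]. }
  assert (RInt (gs beta u s) 1 2 <= Fp s) by (apply C; lra). lra.
Qed.

Lemma integrand_eq s h : s <> 0 -> 0 < h ->
  (u (0 + h + s) - u (0 + h) - u (0 + s) + u 0) ^ 2 / (apow h (1 + beta) * apow s (1 + beta)) = gs beta u s h.
Proof.
  intros Hs Hh. rewrite !Rplus_0_l, (W_u0 _ _ _ _ _ _ H), Rplus_0_r.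
  rewrite !apow_pos by lra. rewrite (Rabs_right h) by lra.
  unfold gs, Dd. rewrite <- !rp_inv.
  assert (0 < Rpower h (1 + beta)) by apply rp_pos.
  assert (0 < Rpower (Rabs s) (1 + beta)) by apply rp_pos.
  field. split; lra.
Qed.

Lemma integrand_eq' s h : s <> 0 -> 0 < h ->
  (u (0 + - h + s) - u (0 + - h) - u (0 + s) + u 0) ^ 2 / (apow (- h) (1 + beta) * apow s (1 + beta)) = gs beta u (- s) h.
Proof.
  intros Hs Hh. rewrite !Rplus_0_l, (W_u0 _ _ _ _ _ _ H), Rplus_0_r.
  rewrite !apow_pos by lra. rewrite Rabs_Ropp, (Rabs_right h) by lra.
  replace (- h + s) with (- (h + - s)) by ring.
  rewrite !(W_ev _ _ _ _ _ _ H).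
  rewrite <- (W_ev _ _ _ _ _ _ H s).
  unfold gs, Dd. rewrite Rabs_Ropp. rewrite <- !rp_inv.
  assert (0 < Rpower h (1 + beta)) by apply rp_pos.
  assert (0 < Rpower (Rabs s) (1 + beta)) by apply rp_pos.
  field. split; lra.
Qed.

Lemma gamma_part : exists G, gamma2_at beta u 0 G /\ 0 < G /\
  G <= c_beta beta ^ 2 * (2 * (2 * K / (2 * q - 2 * beta) + 2 * K / (2 - beta) + 2 * K / eps)).
Proof.
  pose proof H as H'; destruct H' as [Hb HL Hd Hbd He He3 _ _ _ _ _ _].
  destruct (ipos_spec F _ F_pcont F_pnn F_IBi) as (A & B & C).
  assert (Hc : 0 < c_beta beta) by (apply c_beta_pos; lra).
  assert (Hpos : 0 < ipos F).
  { apply Rlt_le_trans with (RInt F 2 3); [| apply C; lra].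
    apply RInt_gt_0; [lra| intros; apply F_pos; lra| intros; apply F_pcont; lra]. }
  exists (c_beta beta ^ 2 * (ipos F + ipos F)). split; [| split].
  - exists F, (ipos F + ipos F). split; [| split; auto].
    + intros s Hs. exists (Fp s), (Fp (- s)). split; [| split; auto].
      * apply (ImpIntPos_ext (gs beta u s)); [| apply (Fp_spec s Hs)].
        intros x Hx. rewrite integrand_eq; auto.
      * apply (ImpIntPos_ext (gs beta u (- s))); [| apply (Fp_spec (- s)); lra].
        intros x Hx. rewrite integrand_eq'; auto.
    + exists (ipos F), (ipos F). split; [auto| split; auto].
      apply (ImpIntPos_ext F); auto. intros x Hx. unfold F. rewrite Ropp_involutive. ring.
  - apply Rmult_lt_0_compat; [apply pow_lt; auto| lra].
  - apply Rmult_le_compat_l; [apply pow_le; lra| lra].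
Qed.
End G.

Lemma glue_der f g h c l d : 0 < d ->
  (forall y, c <= y < c + d -> f y = g y) -> (forall y, c - d < y <= c -> f y = h y) ->
  derivable_pt_lim g c l -> derivable_pt_lim h c l -> derivable_pt_lim f c l.
Proof.
  intros Hd Hg Hh Dg Dh e He.
  destruct (Dg e He) as [dg Kg]. destruct (Dh e He) as [dh Kh].
  assert (Hm : 0 < Rmin d (Rmin dg dh)) by (repeat apply Rmin_glb_lt; auto; apply cond_pos).
  exists (mkposreal _ Hm). intros x Hx0 Hx. simpl in Hx.
  assert (Rmin d (Rmin dg dh) <= d) by apply Rmin_l.
  assert (Rmin d (Rmin dg dh) <= Rmin dg dh) by apply Rmin_r.
  assert (Rmin dg dh <= dg) by apply Rmin_l. assert (Rmin dg dh <= dh) by apply Rmin_r.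
  apply Rabs_def2 in Hx as Hx'.
  destruct (Rlt_dec 0 x).
  - rewrite (Hg (c + x)), (Hg c) by lra. apply Kg; auto. lra.
  - rewrite (Hh (c + x)), (Hh c) by lra. apply Kh; auto. lra.
Qed.

Lemma cont_of_eps f c : (forall e, 0 < e -> exists d, 0 < d /\ forall y, Rabs (y - c) < d -> Rabs (f y - f c) < e) ->
  continuity_pt f c.
Proof.
  intros K. unfold continuity_pt, continue_in, limit1_in, limit_in. intros e He.
  destruct (K e He) as (d & Hd & Kd). exists d. split; auto.
  intros x [_ Hx]. simpl in *. unfold R_dist in *. apply Kd; auto.
Qed.

Lemma glue_cont f g h c d : 0 < d ->
  (forall y, c <= y < c + d -> f y = g y) -> (forall y, c - d < y <= c -> f y = h y) ->
  continuity_pt g c -> continuity_pt h c -> continuity_pt f c.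
Proof.
  intros Hd Hg Hh Cg Ch. apply cont_of_eps. intros e He.
  destruct (cont_eps g c Cg e He) as (dg & Hdg & Kg).
  destruct (cont_eps h c Ch e He) as (dh & Hdh & Kh).
  exists (Rmin d (Rmin dg dh)). split. repeat apply Rmin_glb_lt; auto.
  intros y Hy.
  assert (Rmin d (Rmin dg dh) <= d) by apply Rmin_l.
  assert (Rmin d (Rmin dg dh) <= Rmin dg dh) by apply Rmin_r.
  assert (Rmin dg dh <= dg) by apply Rmin_l. assert (Rmin dg dh <= dh) by apply Rmin_r.
  apply Rabs_def2 in Hy as Hy'.
  destruct (Rle_dec c y).
  - rewrite (Hg y), (Hg c) by lra. apply Kg; lra.
  - rewrite (Hh y), (Hh c) by lra. apply Kh; lra.
Qed.

Lemma cont_loc f g c d : 0 < d -> (forall y, Rabs (y - c) < d -> f y = g y) -> continuity_pt g c -> continuity_pt f c.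
Proof.
  intros Hd Heq Cg. apply cont_of_eps. intros e He.
  destruct (cont_eps g c Cg e He) as (dg & Hdg & Kg).
  exists (Rmin d dg). split. apply Rmin_glb_lt; auto.
  intros y Hy. assert (Rmin d dg <= d) by apply Rmin_l. assert (Rmin d dg <= dg) by apply Rmin_r.
  rewrite (Heq y), (Heq c) by (try rewrite Rminus_diag, Rabs_R0; lra). apply Kg; lra.
Qed.

Lemma even_deriv f x l : (forall y, f (- y) = f y) -> derivable_pt_lim f x l -> derivable_pt_lim f (- x) (- l).
Proof.
  intros Hev D.
  assert (H1 : derivable_pt_lim (fun y => f (- y)) (- x) (l * -1)).
  { apply (derivable_pt_lim_comp Ropp f (- x) (-1) l).
    - exact (derivable_pt_lim_opp id (- x) 1 (derivable_pt_lim_id (- x))).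
    - rewrite Ropp_involutive; auto. }
  replace (- l) with (l * -1) by ring.
  apply (dpl_loc _ (fun y => f (- y)) _ _ 1); [lra| intros; rewrite Hev; auto| auto].
Qed.

Lemma odd_cont f x : (forall y, f (- y) = - f y) -> continuity_pt f x -> continuity_pt f (- x).
Proof.
  intros Hod C. apply cont_of_eps. intros e He.
  destruct (cont_eps f x C e He) as (d & Hd & K). exists d; split; auto.
  intros y Hy.
  assert (E : f y - f (- x) = - (f (- y) - f x)) by (rewrite <- (Ropp_involutive y) at 1; rewrite (Hod (- y)), (Hod x); ring).
  rewrite E, Rabs_Ropp. apply K. replace (- y - x) with (- (y - - x)) by ring. rewrite Rabs_Ropp; auto.
Qed.

Definition sgn (x : R) : R := if Rlt_dec 0 x then 1 else if Rlt_dec x 0 then -1 else 0.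

Lemma sgn_odd x : sgn (- x) = - sgn x.
Proof. unfold sgn. destruct (Rlt_dec 0 x), (Rlt_dec 0 (- x)), (Rlt_dec (- x) 0), (Rlt_dec x 0); lra. Qed.

Lemma sgn_pos x : 0 < x -> sgn x = 1.
Proof. unfold sgn; intros; destruct (Rlt_dec 0 x); lra. Qed.

Lemma sgn_0 : sgn 0 = 0.
Proof. unfold sgn; destruct (Rlt_dec 0 0); [lra|]; destruct (Rlt_dec 0 0); lra. Qed.

Lemma Rabs_sgn x : Rabs (sgn x) <= 1.
Proof. unfold sgn. destruct (Rlt_dec 0 x); [rewrite Rabs_R1; lra|]. destruct (Rlt_dec x 0).
  rewrite Rabs_left; lra. rewrite Rabs_R0; lra. Qed.

Section CON.
Variables (beta delta eps : R).
Hypothesis Hb : 0 < beta < 2.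
Hypothesis Hd : 0 < delta.
Hypothesis Hbd : 1 < beta + delta.
Hypothesis He : 0 < eps.
Hypothesis He2 : eps < beta / 2.

Definition p0 := beta + delta.
Definition al := beta - eps.
Definition ca := p0 + 1 - al.
Definition cb := al - p0.

Definition phi (t : R) := ca * apow t p0 + cb * apow t (p0 + 1).
Definition psi (t : R) := ca * p0 * apow t (p0 - 1) + cb * (p0 + 1) * apow t p0.

Definition uc (x : R) := if Rle_dec 1 (Rabs x) then Rpower (Rabs x) al else phi (Rabs x).
Definition uc' (x : R) := sgn x * (if Rle_dec 1 (Rabs x) then al * Rpower (Rabs x) (al - 1) else psi (Rabs x)).

Lemma ca_cb : ca + cb = 1.
Proof. unfold ca, cb; ring. Qed.
Lemma ca_cb' : ca * p0 + cb * (p0 + 1) = al.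
Proof. unfold ca, cb; ring. Qed.
Lemma cb_neg : cb < 0.
Proof. unfold cb, al, p0; lra. Qed.
Lemma ca_pos : 0 < ca <= p0 + 1.
Proof. unfold ca, al, p0; lra. Qed.

Lemma uc_even x : uc (- x) = uc x.
Proof. unfold uc; rewrite Rabs_Ropp; auto. Qed.

Lemma uc'_odd x : uc' (- x) = - uc' x.
Proof. unfold uc'; rewrite Rabs_Ropp, sgn_odd; ring. Qed.

Lemma phi_pos t : 0 < t -> phi t = ca * Rpower t p0 + cb * Rpower t (p0 + 1).
Proof. intros; unfold phi; rewrite !apow_pos by lra; rewrite Rabs_right by lra; auto. Qed.

Lemma phi_bounds t : 0 <= t <= 1 -> 0 <= phi t <= ca * apow t p0.
Proof.
  intros Ht. destruct (Req_dec t 0) as [->|Hn].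
  - unfold phi; rewrite !apow_0; lra.
  - rewrite phi_pos by lra. rewrite apow_pos by lra. rewrite Rabs_right by lra.
    rewrite rp_plus, rp_1 by lra.
    assert (0 < Rpower t p0) by apply rp_pos. assert (Hcb := cb_neg). assert (Hca := ca_pos).
    assert (Hab := ca_cb).
    assert (Hn1 : cb * Rpower t p0 <= 0) by nra.
    assert (Hn2 : 0 <= (cb * Rpower t p0) * (t - 1)) by (replace ((cb * Rpower t p0) * (t - 1)) with ((- (cb * Rpower t p0)) * (1 - t)) by ring; apply Rmult_le_pos; lra).
    assert (0 < t) by lra.
    split; nra.
Qed.

Lemma uc_small x : Rabs x < 1 -> uc x = phi (Rabs x).
Proof. intros; unfold uc; destruct (Rle_dec 1 (Rabs x)); lra. Qed.

Lemma uc_big x : 1 <= Rabs x -> uc x = Rpower (Rabs x) al.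
Proof. intros; unfold uc; destruct (Rle_dec 1 (Rabs x)); lra. Qed.

Lemma uc_der_pos x : 0 <= x -> derivable_pt_lim uc x (uc' x).
Proof.
  intros Hx. destruct (Rtotal_order x 1) as [Hx1|[Hx1|Hx1]].
  - destruct (Req_dec x 0) as [->|Hx0].
    +
      unfold uc'. rewrite sgn_0, Rmult_0_l.
      intros e Hep.
      destruct (small_pow ca (p0 - 1) (e / 2) 1) as (y & Hy & Ky); [left; apply ca_pos| unfold p0; lra| lra| lra|].
      exists (mkposreal y (proj1 Hy)). intros h Hh0 Hh. simpl in Hh.
      rewrite Rplus_0_l, uc_small, uc_small by (rewrite ?Rabs_R0; lra). rewrite Rabs_R0.
      unfold phi at 2. rewrite !apow_0. replace (ca * 0 + cb * 0) with 0 by ring. rewrite !Rminus_0_r.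
      assert (Hah : 0 < Rabs h) by (apply Rabs_pos_lt; auto).
      destruct (phi_bounds (Rabs h)) as [P1 P2]; [split; lra|].
      rewrite apow_pos in P2 by lra. rewrite Rabs_Rabsolu in P2.
      unfold Rdiv. rewrite Rabs_mult, Rabs_inv. rewrite (Rabs_right (phi (Rabs h))) by lra.
      apply Rle_lt_trans with (ca * Rpower (Rabs h) (p0 - 1)); [| specialize (Ky (Rabs h) ltac:(lra)); lra].
      replace (Rpower (Rabs h) (p0 - 1)) with (Rpower (Rabs h) p0 * / Rabs h).
      2:{ rewrite <- (rp_1 (Rabs h)) at 2 by lra. rewrite rp_inv, <- rp_plus. f_equal; ring. }
      rewrite <- Rmult_assoc. apply Rmult_le_compat_r; [left; apply Rinv_0_lt_compat; lra| lra].
    +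
      assert (Hx' : 0 < x) by lra.
      unfold uc'. rewrite sgn_pos, Rmult_1_l, Rabs_right by lra.
      destruct (Rle_dec 1 x); [lra|].
      apply (dpl_loc _ (fun y => ca * Rpower y p0 + cb * Rpower y (p0 + 1)) _ _ (Rmin x (1 - x))).
      { apply Rmin_glb_lt; lra. }
      { intros y Hy. assert (Rmin x (1 - x) <= x) by apply Rmin_l. assert (Rmin x (1 - x) <= 1 - x) by apply Rmin_r.
        apply Rabs_def2 in Hy. rewrite uc_small by (rewrite Rabs_right; lra). rewrite Rabs_right by lra.
        apply phi_pos; lra. }
      unfold psi. rewrite !apow_pos by lra. rewrite Rabs_right by lra.
      replace (ca * p0 * Rpower x (p0 - 1) + cb * (p0 + 1) * Rpower x p0) with
        (ca * (p0 * Rpower x (p0 - 1)) + cb * ((p0 + 1) * Rpower x (p0 + 1 - 1))).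
      2:{ assert (E : p0 + 1 - 1 = p0) by ring. rewrite E. ring. }
      apply derivable_pt_lim_plus; apply derivable_pt_lim_scal; apply derivable_pt_lim_power; auto.
  -
    subst x. unfold uc'. rewrite sgn_pos, Rmult_1_l, Rabs_R1 by lra.
    destruct (Rle_dec 1 1); [|lra]. rewrite rp_one, Rmult_1_r.
    apply (glue_der _ (fun y => Rpower y al) (fun y => ca * Rpower y p0 + cb * Rpower y (p0 + 1)) 1 al (1 / 2)); [lra| | | |].
    + intros y Hy. rewrite uc_big; rewrite Rabs_right; lra.
    + intros y Hy. destruct (Req_dec y 1) as [->|Hy1].
      * rewrite uc_big by (rewrite Rabs_R1; lra). rewrite Rabs_R1, !rp_one. rewrite !Rmult_1_r, ca_cb; reflexivity.
      * rewrite uc_small by (rewrite Rabs_right; lra). rewrite Rabs_right by lra. apply phi_pos; lra.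
    + assert (D := derivable_pt_lim_power 1 al ltac:(lra)). rewrite rp_one, Rmult_1_r in D. exact D.
    + rewrite <- ca_cb'.
      replace (ca * p0 + cb * (p0 + 1)) with (ca * (p0 * Rpower 1 (p0 - 1)) + cb * ((p0 + 1) * Rpower 1 (p0 + 1 - 1)))
        by (rewrite !rp_one; ring).
      apply derivable_pt_lim_plus; apply derivable_pt_lim_scal; apply derivable_pt_lim_power; lra.
  -
    unfold uc'. rewrite sgn_pos, Rmult_1_l, Rabs_right by lra.
    destruct (Rle_dec 1 x); [|lra].
    apply (dpl_loc _ (fun y => Rpower y al) _ _ (x - 1)); [lra| |].
    { intros y Hy. apply Rabs_def2 in Hy. rewrite uc_big; rewrite Rabs_right; lra. }
    apply derivable_pt_lim_power; lra.
Qed.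

Lemma uc_der x : derivable_pt_lim uc x (uc' x).
Proof.
  destruct (Rle_dec 0 x). apply uc_der_pos; auto.
  replace x with (- (- x)) by ring. rewrite uc'_odd.
  apply even_deriv. apply uc_even. apply uc_der_pos; lra.
Qed.


Definition LamC := 2 * p0 * (p0 + 1) + (p0 + 1).

Lemma psi_bound t : 0 < t <= 1 -> Rabs (psi t) <= 2 * p0 * (p0 + 1) * Rpower t (p0 - 1).
Proof.
  intros Ht. unfold psi. rewrite !apow_pos by lra. rewrite (Rabs_right t) by lra.
  assert (Hca := ca_pos). assert (Hcb := cb_neg).
  assert (Hcb2 : - cb <= p0) by (unfold cb, al, p0; lra).
  assert (Hp0 : 1 < p0) by (unfold p0; lra).
  assert (A : 0 < Rpower t (p0 - 1)) by apply rp_pos.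
  assert (B : 0 < Rpower t p0) by apply rp_pos.
  assert (C : Rpower t p0 <= Rpower t (p0 - 1)) by (apply rp_anti_exp; lra).
  apply Rle_trans with (Rabs (ca * p0 * Rpower t (p0 - 1)) + Rabs (cb * (p0 + 1) * Rpower t p0)).
  apply Rabs_triang.
  rewrite !Rabs_mult, !(Rabs_right (Rpower _ _)) by lra.
  rewrite (Rabs_right ca), (Rabs_right p0), (Rabs_right (p0 + 1)), (Rabs_left cb) by lra.
  assert (ca * p0 * Rpower t (p0 - 1) <= (p0 + 1) * p0 * Rpower t (p0 - 1)).
  { apply Rmult_le_compat_r; [lra|]. apply Rmult_le_compat_r; lra. }
  assert (- cb * (p0 + 1) * Rpower t p0 <= p0 * (p0 + 1) * Rpower t (p0 - 1)).
  { apply Rmult_le_compat; try lra. apply Rmult_le_pos; lra. apply Rmult_le_compat_r; lra. }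
  lra.
Qed.

Lemma uc'_small_bound x : Rabs x < 1 -> Rabs (uc' x) <= LamC * apow x (beta + delta - 1).
Proof.
  intros Hx. destruct (Req_dec x 0) as [->|Hx0].
  - unfold uc'. rewrite sgn_0, Rmult_0_l, Rabs_R0, apow_0. lra.
  - assert (Hax : 0 < Rabs x) by (apply Rabs_pos_lt; auto).
    unfold uc'. destruct (Rle_dec 1 (Rabs x)); [lra|].
    rewrite apow_pos by auto. rewrite Rabs_mult.
    assert (S := Rabs_sgn x). assert (P := psi_bound (Rabs x) ltac:(lra)).
    assert (Hp0 : 1 < p0) by (unfold p0; lra).
    assert (0 < Rpower (Rabs x) (p0 - 1)) by apply rp_pos.
    assert (0 <= Rabs (psi (Rabs x))) by apply Rabs_pos.
    assert (0 <= Rabs (sgn x)) by apply Rabs_pos.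
    apply Rle_trans with (1 * Rabs (psi (Rabs x))). apply Rmult_le_compat_r; lra.
    unfold LamC. fold p0. unfold p0 in *. 
    assert (0 <= (beta + delta + 1) * Rpower (Rabs x) (beta + delta - 1)) by (apply Rmult_le_pos; lra). lra.
Qed.

Lemma uc'_cont_pos x : 0 <= x -> continuity_pt uc' x.
Proof.
  intros Hx. assert (Hp0 : 1 < p0) by (unfold p0; lra).
  destruct (Rtotal_order x 1) as [Hx1|[Hx1|Hx1]].
  - destruct (Req_dec x 0) as [->|Hx0].
    + apply cont_of_eps. intros e Hep.
      destruct (small_pow LamC (p0 - 1) (e / 2) 1) as (y & Hy & Ky); [unfold LamC; nra| lra| lra| lra|].
      exists y. split; [lra|]. intros z Hz. rewrite Rminus_0_r in Hz.
      assert (U0 : uc' 0 = 0) by (unfold uc'; rewrite sgn_0; ring). rewrite U0, Rminus_0_r.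
      destruct (Req_dec z 0) as [->|Hz0]. { rewrite U0, Rabs_R0; lra. }
      assert (B := uc'_small_bound z ltac:(lra)). rewrite apow_pos in B by auto.
      assert (K := Ky (Rabs z) ltac:(split; [apply Rabs_pos_lt; auto| lra])). unfold p0 in *. lra.
    + apply (cont_loc _ (fun y => ca * p0 * Rpower y (p0 - 1) + cb * (p0 + 1) * Rpower y p0) _ (Rmin x (1 - x))).
      { apply Rmin_glb_lt; lra. }
      { intros y Hy. assert (Rmin x (1 - x) <= x) by apply Rmin_l. assert (Rmin x (1 - x) <= 1 - x) by apply Rmin_r.
        apply Rabs_def2 in Hy. unfold uc'. rewrite sgn_pos, Rmult_1_l by lra. rewrite Rabs_right by lra.
        destruct (Rle_dec 1 y); [lra|]. unfold psi. rewrite !apow_pos by lra. rewrite Rabs_right by lra. auto. }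
      apply continuity_pt_plus; apply continuity_pt_scal; apply rp_contpt; lra.
  - subst x. apply (glue_cont _ (fun y => al * Rpower y (al - 1)) (fun y => ca * p0 * Rpower y (p0 - 1) + cb * (p0 + 1) * Rpower y p0) 1 (1 / 2)); [lra| | | |].
    + intros y Hy. unfold uc'. rewrite sgn_pos, Rmult_1_l by lra. rewrite Rabs_right by lra.
      destruct (Rle_dec 1 y); [auto| lra].
    + intros y Hy. unfold uc'. rewrite sgn_pos, Rmult_1_l by lra. rewrite Rabs_right by lra.
      destruct (Rle_dec 1 y).
      * assert (y = 1) by lra. subst y. rewrite !rp_one, !Rmult_1_r. rewrite ca_cb'; auto.
      * unfold psi. rewrite !apow_pos by lra. rewrite Rabs_right by lra. auto.
    + apply continuity_pt_scal; apply rp_contpt; lra.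
    + apply continuity_pt_plus; apply continuity_pt_scal; apply rp_contpt; lra.
  - apply (cont_loc _ (fun y => al * Rpower y (al - 1)) _ (x - 1)); [lra| |].
    + intros y Hy. apply Rabs_def2 in Hy. unfold uc'. rewrite sgn_pos, Rmult_1_l by lra. rewrite Rabs_right by lra.
      destruct (Rle_dec 1 y); [auto| lra].
    + apply continuity_pt_scal; apply rp_contpt; lra.
Qed.

Lemma uc'_cont : continuity uc'.
Proof.
  intros x. destruct (Rle_dec 0 x). apply uc'_cont_pos; auto.
  replace x with (- (- x)) by ring. apply odd_cont. apply uc'_odd. apply uc'_cont_pos; lra.
Qed.

Lemma uc_adm : (1 < beta -> eps < (beta - 1) / 2) -> admissible beta LamC delta eps uc.
Proof.
  intros H3. unfold admissible. split; [auto| split; [auto| split; [auto|]]].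
  split; [| split; [| split]].
  - exists uc'. split; [apply uc_der| split; [apply uc'_cont| apply uc'_small_bound]].
  - apply uc_even.
  - intros x Hx. apply uc_big; auto.
  - intros x Hx. rewrite uc_small by auto.
    destruct (phi_bounds (Rabs x)) as [P1 P2]. { split; [apply Rabs_pos| lra]. }
    split; auto. apply Rle_trans with (ca * apow x p0).
    + assert (E : apow (Rabs x) p0 = apow x p0) by (unfold apow; rewrite Rabs_Rabsolu; auto).
      rewrite <- E; auto.
    + apply Rmult_le_compat_r. unfold apow; destruct (Rlt_dec 0 (Rabs x)); [left; apply rp_pos| lra].
      assert (Hca := ca_pos). unfold LamC. assert (0 < p0) by (unfold p0; lra). nra.
Qed.
End CON.

Lemma Kc_pos' beta Lam q : 0 < beta < 2 -> 0 < Lam -> 2 * q < 2 + beta -> 0 < Kc beta Lam q.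
Proof.
  intros Hb HL Hq. unfold Kc.
  assert (0 < 16 * (Lam + 2) ^ 2 / (2 - beta)) by (apply Rdiv_lt_0_compat; [apply Rmult_lt_0_compat; [lra| apply pow_lt; lra]| lra]).
  assert (0 < 2924 * (Lam + 1) ^ 2 / beta) by (apply Rdiv_lt_0_compat; [apply Rmult_lt_0_compat; [lra| apply pow_lt; lra]| lra]).
  assert (0 < 8 * (Lam + 2) ^ 2 / (2 + beta - 2 * q)) by (apply Rdiv_lt_0_compat; [apply Rmult_lt_0_compat; [lra| apply pow_lt; lra]| lra]).
  lra.
Qed.

Lemma part1 beta Lam delta :
  0 < beta < 2 -> 0 < Lam -> 0 < delta -> 1 < beta + delta ->
  exists eps0 C0 C1, 0 < eps0 /\ 0 < C0 /\ 0 < C1 /\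
     forall (eps : R) (u : R -> R), eps < eps0 -> admissible beta Lam delta eps u ->
       (exists L, frac_lap_at beta u 0 L /\ C0 / eps <= L) /\
       (exists G, gamma2_at beta u 0 G /\ 0 < G <= C1 / eps).
Proof.
  intros Hb HL Hd Hbd.
  set (q := beta + Rmin delta ((2 - beta) / 4)).
  assert (Hm1 : Rmin delta ((2 - beta) / 4) <= delta) by apply Rmin_l.
  assert (Hm2 : Rmin delta ((2 - beta) / 4) <= (2 - beta) / 4) by apply Rmin_r.
  assert (Hm3 : 0 < Rmin delta ((2 - beta) / 4)) by (apply Rmin_glb_lt; lra).
  assert (Hq1 : beta < q <= beta + delta) by (unfold q; lra).
  assert (Hq2 : 2 * q < 2 + beta) by (unfold q; lra).
  set (K := Kc beta Lam q).
  assert (HK : 0 < K) by (apply Kc_pos'; auto).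
  set (c := c_beta beta). assert (Hc : 0 < c) by (apply c_beta_pos; auto).
  set (A := 2 * K / (2 * q - 2 * beta) + 2 * K / (2 - beta)).
  assert (HA : 0 < A) by (unfold A; assert (0 < 2 * K / (2 * q - 2 * beta)) by (apply Rdiv_lt_0_compat; lra);
     assert (0 < 2 * K / (2 - beta)) by (apply Rdiv_lt_0_compat; lra); lra).
  exists (Rmin (beta / 4) (1 / 2)), (4 * c), (c ^ 2 * (2 * (A + 2 * K))).
  split; [apply Rmin_glb_lt; lra| split; [lra| split]].
  { apply Rmult_lt_0_compat; [apply pow_lt; auto| lra]. }
  intros eps u Heps Hadm.
  assert (Hm4 : Rmin (beta / 4) (1 / 2) <= beta / 4) by apply Rmin_l.
  assert (Hm5 : Rmin (beta / 4) (1 / 2) <= 1 / 2) by apply Rmin_r.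
  destruct (UH_of_adm beta Lam delta eps u Hb HL Hd Hbd Hadm) as [u' H].
  pose proof H as H'; destruct H' as [_ _ _ _ He He3 _ _ _ _ _ _].
  split.
  - destruct (frac_part _ _ _ _ _ _ H) as (L & HL1 & HL2). exists L; split; auto.
  - assert (Hal1 : beta - eps <> 1).
    { destruct Hadm as (_ & _ & H3 & _). destruct (Rlt_dec 1 beta).
      - specialize (H3 r). lra.
      - lra. }
    destruct (gamma_part _ _ _ _ _ _ H ltac:(lra) ltac:(lra) Hal1 q Hq1 Hq2) as (G & HG1 & HG2 & HG3).
    exists G. split; auto. split; auto.
    fold K c in HG3. fold A in HG3.
    replace (2 * K / (2 * q - 2 * beta) + 2 * K / (2 - beta) + 2 * K / eps) with (A + 2 * K / eps) in HG3 by (unfold A; ring).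
    apply Rle_trans with (1 := HG3).
    assert (A <= A / eps).
    { unfold Rdiv. rewrite <- (Rmult_1_r A) at 1. apply Rmult_le_compat_l; [lra|].
      rewrite <- Rinv_1. apply Rinv_le_contravar; lra. }
    assert (0 < c ^ 2) by (apply pow_lt; auto).
    replace (c ^ 2 * (2 * (A + 2 * K)) / eps) with (c ^ 2 * (2 * (A / eps + 2 * K / eps))) by (field; lra).
    apply Rmult_le_compat_l; lra.
Qed.

Theorem theorem3p1 (beta Lam delta : R) :
  0 < beta < 2 -> 0 < Lam -> 0 < delta -> 1 < beta + delta ->
  (exists eps0 C0 C1, 0 < eps0 /\ 0 < C0 /\ 0 < C1 /\
     forall (eps : R) (u : R -> R), eps < eps0 -> admissible beta Lam delta eps u ->
       (exists L, frac_lap_at beta u 0 L /\ C0 / eps <= L) /\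
       (exists G, gamma2_at beta u 0 G /\ 0 < G <= C1 / eps))
  /\
  (forall mu, 0 < mu -> exists (Lam' eps : R) (u : R -> R) (L G : R),
     0 < Lam' /\ admissible beta Lam' delta eps u /\
     frac_lap_at beta u 0 L /\ gamma2_at beta u 0 G /\ 0 < G < mu * L ^ 2).
Proof.
  intros Hb HL Hd Hbd. split; [apply part1; auto|].
  intros mu Hmu.
  set (Lam' := LamC beta delta).
  assert (HL' : 0 < Lam') by (unfold Lam', LamC, p0; nra).
  destruct (part1 beta Lam' delta Hb HL' Hd Hbd) as (eps0 & C0 & C1 & He0 & HC0 & HC1 & K).
  set (e1 := if Rlt_dec 1 beta then (beta - 1) / 4 else 1).
  assert (He1 : 0 < e1 /\ (1 < beta -> e1 = (beta - 1) / 4)).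
  { unfold e1; destruct (Rlt_dec 1 beta); split; intros; lra. }
  set (eps := Rmin (Rmin (eps0 / 2) (beta / 4)) (Rmin e1 (mu * C0 ^ 2 / (2 * C1)))).
  assert (Hm : 0 < mu * C0 ^ 2 / (2 * C1)) by (apply Rdiv_lt_0_compat; [apply Rmult_lt_0_compat; [lra| apply pow_lt; lra]| lra]).
  assert (Heps : 0 < eps) by (unfold eps; repeat apply Rmin_glb_lt; lra).
  assert (E1 : eps <= eps0 / 2) by (unfold eps; eapply Rle_trans; apply Rmin_l).
  assert (E2 : eps <= beta / 4) by (unfold eps; eapply Rle_trans; [apply Rmin_l| apply Rmin_r]).
  assert (E3 : eps <= e1) by (unfold eps; eapply Rle_trans; [apply Rmin_r| apply Rmin_l]).
  assert (E4 : eps <= mu * C0 ^ 2 / (2 * C1)) by (unfold eps; eapply Rle_trans; [apply Rmin_r| apply Rmin_r]).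
  assert (Hadm : admissible beta Lam' delta eps (uc beta delta eps)).
  { apply uc_adm; auto; try lra; intros Hb1; destruct He1 as [_ He1']; rewrite (He1' Hb1) in E3; lra. }
  destruct (K eps (uc beta delta eps) ltac:(lra) Hadm) as [(L & HL1 & HL2) (G & HG1 & HG2 & HG3)].
  exists Lam', eps, (uc beta delta eps), L, G. split; [exact HL'|]. split; [exact Hadm|]. split; [exact HL1|]. split; [exact HG1|]. split; [exact HG2|].
  assert (HL0 : 0 < C0 / eps) by (apply Rdiv_lt_0_compat; lra).
  assert (C0 / eps * (C0 / eps) <= L * L) by (apply Rmult_le_compat; lra).
  apply Rle_lt_trans with (C1 / eps); auto.
  apply Rlt_le_trans with (mu * (C0 / eps * (C0 / eps))).
  - assert (eps * C1 * 2 <= mu * C0 ^ 2).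
    { apply Rmult_le_reg_r with (/ (2 * C1)). apply Rinv_0_lt_compat; lra.
      replace (eps * C1 * 2 * / (2 * C1)) with eps by (field; lra). auto. }
    apply Rmult_lt_reg_r with (eps * eps). nra.
    replace (C1 / eps * (eps * eps)) with (C1 * eps) by (field; lra).
    replace (mu * (C0 / eps * (C0 / eps)) * (eps * eps)) with (mu * C0 ^ 2) by (field; lra).
    nra.
  - simpl. rewrite Rmult_1_r. apply Rmult_le_compat_l; lra.
Qed.
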